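(* Let $\mathcal{F}=(\mu_n,\mathcal{S}_n,L_n,\pi_n)_{n\ge1}$ be a family of irreducible, reversible continuous-time finite Markov chains with $\pi_n(|\mu_n/\pi_n|^2)\to\infty$. The following are equivalent: (1) $\mathcal{F}$ has an $L^2$-cutoff; (2) for all $\epsilon>0$ and $c>0$, $T_{n,2}(\mu_n,\epsilon)\lambda_{n,j_n(c)}\to\infty$; (3) there is $\epsilon>0$ such that $T_{n,2}(\mu_n,\epsilon)\lambda_{n,j_n(c)}\to\infty$ for all $c>0$; (4) for all $c>0$, $\tau_n(c)\lambda_{n,j_n(c)}\to\infty$; (5) for all $\tilde c>0$, $c>0$, $\tau_n(\tilde c)\lambda_{n,j_n(c)}\to\infty$; (6) there is $\tilde c>0$ with $\tau_n(\tilde c)\lambda_{n,j_n(c)}\to\infty$ for all $c>0$. Moreover, if $\mathcal{F}$ has an $L^2$-cutoff, then $\tau_n(c)$ is an $L^2$-cutoff time for every $c>0$, and \[|T_{n,2}(\mu_n,\epsilon)-T_{n,2}(\mu_n,\delta)|=O(1/\lambda_{n,j_n(c)})\ \ \forall\epsilon,\delta,c>0,\qquad |T_{n,2}(\mu_n,\epsilon)-\tau_n(c)|=O\big(\sqrt{\tau_n(c)/\lambda_{n,j_n(c)}}\big)\ \ \forall\epsilon,c>0.\]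
   Context: For the $n$th chain, $H_{n,t}=e^{tL_n}$, $d_{n,2}(\mu_n,t)=\big(\sum_y|\mu_nH_{n,t}(y)/\pi_n(y)-1|^2\pi_n(y)\big)^{1/2}$, $T_{n,2}(\mu_n,\epsilon)=\min\{t\ge0:d_{n,2}(\mu_n,t)\le\epsilon\}$, and $\pi_n(|\mu_n/\pi_n|^2)=\sum_y\mu_n(y)^2/\pi_n(y)$. Let $0=\lambda_{n,0}<\lambda_{n,1}\le\dots\le\lambda_{n,|\mathcal{S}_n|-1}$ be the eigenvalues of $-L_n$ with $L^2(\pi_n)$-orthonormal right eigenvectors $\phi_{n,0}=\mathbf 1,\phi_{n,1},\dots$; $\mu_n(\phi)=\sum_x\mu_n(x)\phi(x)$. For $c>0$: $j_n(c)=\min\{j\ge1:\sum_{i=1}^j|\mu_n(\phi_{n,i})|^2>c\}$ and $\tau_n(c)=\max_{j\ge j_n(c)}\frac{\log(1+\sum_{i=1}^j|\mu_n(\phi_{n,i})|^2)}{2\lambda_{n,j}}$. $L^2$-cutoff: there is $t_n>0$ with $d_{n,2}(\mu_n,(1+a)t_n)\to0$ and $d_{n,2}(\mu_n,(1-a)t_n)\to\infty$ for all $a\in(0,1)$; $t_n$ is then a cutoff time. $a_n=O(b_n)$ means $\sup_na_n/b_n<\infty$. *)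

(* Defs.v *)
From Stdlib Require Import Reals ClassicalEpsilon Factorial.
Open Scope R_scope.

Fixpoint sumN (N : nat) (f : nat -> R) : R :=
  match N with 0%nat => 0 | S k => sumN k f + f k end.

(* A continuous-time finite Markov chain on S = {0,...,sz-1} with generator
   gen, stationary distribution pi, initial distribution mu, together with a
   choice of eigenvalues lam_0 <= lam_1 <= ... of -gen and L^2(pi)-orthonormal
   right eigenvectors phi_0 = 1, phi_1, ... *)
Record chain := mkChain {
  sz  : nat;
  gen : nat -> nat -> R;
  pi  : nat -> R;
  mu  : nat -> R;
  lam : nat -> R;
  phi : nat -> nat -> R
}.

Inductive reach (N : nat) (L : nat -> nat -> R) : nat -> nat -> Prop :=
| reach_refl x : reach N L x x
| reach_step x y z : (y < N)%nat -> 0 < L x y -> reach N L y z -> reach N L x z.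

Definition is_generator (N : nat) (L : nat -> nat -> R) : Prop :=
  (forall x y, (x < N)%nat -> (y < N)%nat -> x <> y -> 0 <= L x y) /\
  (forall x, (x < N)%nat -> sumN N (fun y => L x y) = 0).

Definition irreducible (N : nat) (L : nat -> nat -> R) : Prop :=
  forall x y, (x < N)%nat -> (y < N)%nat -> reach N L x y.

Definition rev_chain (c : chain) : Prop :=
  (1 <= sz c)%nat /\
  is_generator (sz c) (gen c) /\
  irreducible (sz c) (gen c) /\
  (forall x, (x < sz c)%nat -> 0 < pi c x) /\
  sumN (sz c) (pi c) = 1 /\
  (forall x y, (x < sz c)%nat -> (y < sz c)%nat ->
     pi c x * gen c x y = pi c y * gen c y x) /\
  (forall x, (x < sz c)%nat -> 0 <= mu c x) /\
  sumN (sz c) (mu c) = 1.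

Definition spectral_data (c : chain) : Prop :=
  (forall i x, (i < sz c)%nat -> (x < sz c)%nat ->
     sumN (sz c) (fun y => gen c x y * phi c i y) = - lam c i * phi c i x) /\
  (forall i k, (i < sz c)%nat -> (k < sz c)%nat ->
     sumN (sz c) (fun x => pi c x * phi c i x * phi c k x)
       = if Nat.eqb i k then 1 else 0) /\
  (forall x, (x < sz c)%nat -> phi c 0 x = 1) /\
  lam c 0 = 0 /\
  ((1 < sz c)%nat -> 0 < lam c 1) /\
  (forall i k, (1 <= i)%nat -> (i <= k)%nat -> (k < sz c)%nat -> lam c i <= lam c k).

Definition matmul (N : nat) (A B : nat -> nat -> R) : nat -> nat -> R :=
  fun x y => sumN N (fun z => A x z * B z y).
Fixpoint matpow (N : nat) (A : nat -> nat -> R) (m : nat) : nat -> nat -> R :=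
  match m with
  | 0%nat => fun x y => if Nat.eqb x y then 1 else 0
  | S k => matmul N (matpow N A k) A
  end.

(* H_t = e^{tL} = sum_m t^m L^m / m!  (the series converges; its sum is unique) *)
Definition heat (N : nat) (L : nat -> nat -> R) (t : R) (x y : nat) : R :=
  epsilon (inhabits 0)
    (fun h => infinite_sum (fun m => t ^ m / INR (fact m) * matpow N L m x y) h).

Definition muH (c : chain) (t : R) (y : nat) : R :=
  sumN (sz c) (fun x => mu c x * heat (sz c) (gen c) t x y).

Definition d2 (c : chain) (t : R) : R :=
  sqrt (sumN (sz c) (fun y => (muH c t y / pi c y - 1) ^ 2 * pi c y)).

Definition T2 (c : chain) (eps : R) : R :=
  epsilon (inhabits 0)
    (fun T => 0 <= T /\ d2 c T <= eps /\
              forall t, 0 <= t -> d2 c t <= eps -> T <= t).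

Definition chi2 (c : chain) : R := sumN (sz c) (fun y => mu c y ^ 2 / pi c y).

Definition mu_phi (c : chain) (i : nat) : R :=
  sumN (sz c) (fun x => mu c x * phi c i x).

Definition psum (c : chain) (j : nat) : R :=
  sumN j (fun i => (mu_phi c (S i)) ^ 2).

Fixpoint jsearch (f : nat -> R) (cc : R) (j fuel : nat) : nat :=
  match fuel with
  | 0%nat => j
  | S k => if Rlt_dec cc (f j) then j else jsearch f cc (S j) k
  end.

(* j_n(c) = min { j >= 1 : sum_{i=1}^j |mu(phi_i)|^2 > c }, searched over
   1 <= j <= |S|-1; (conventional value |S| when the set is empty) *)
Definition jn (c : chain) (cc : R) : nat := jsearch (psum c) cc 1 (sz c - 1).

Fixpoint maxfrom (g : nat -> R) (j fuel : nat) : R :=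
  match fuel with
  | 0%nat => g j
  | S k => Rmax (g j) (maxfrom g (S j) k)
  end.

Definition taun (c : chain) (cc : R) : R :=
  let j0 := jn c cc in
  maxfrom (fun j => ln (1 + psum c j) / (2 * lam c j)) j0 (sz c - 1 - j0).

Definition cutoff_time (F : nat -> chain) (t : nat -> R) : Prop :=
  (exists N0, forall n, (N0 <= n)%nat -> 0 < t n) /\
  forall a, 0 < a < 1 ->
    Un_cv (fun n => d2 (F n) ((1 + a) * t n)) 0 /\
    cv_infty (fun n => d2 (F n) ((1 - a) * t n)).

Definition has_L2_cutoff (F : nat -> chain) : Prop :=
  exists t, cutoff_time F t.

Definition bigO (a b : nat -> R) : Prop :=
  exists C N0, forall n, (N0 <= n)%nat -> a n <= C * b n.

(* Main.v *)
Require Import Defs.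
From Stdlib Require Import Reals.
From Stdlib Require Import Lra Lia ClassicalEpsilon Factorial.
From mathcomp Require all_boot all_algebra Rstruct.
Open Scope R_scope.

Lemma sumN_ext N f g : (forall i, (i < N)%nat -> f i = g i) -> sumN N f = sumN N g.
Proof. induction N; simpl; intros H; auto. rewrite IHN by (intros; apply H; lia). rewrite H by lia. auto. Qed.

Lemma sumN_plus N f g : sumN N (fun i => f i + g i) = sumN N f + sumN N g.
Proof. induction N; simpl; [lra|]. rewrite IHN. lra. Qed.

Lemma sumN_minus N f g : sumN N (fun i => f i - g i) = sumN N f - sumN N g.
Proof. induction N; simpl; [lra|]. rewrite IHN. lra. Qed.

Lemma sumN_scal N c f : sumN N (fun i => c * f i) = c * sumN N f.
Proof. induction N; simpl; [lra|]. rewrite IHN. lra. Qed.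

Lemma sumN_scalr N c f : sumN N (fun i => f i * c) = sumN N f * c.
Proof. induction N; simpl; [lra|]. rewrite IHN. lra. Qed.

Lemma sumN_zero N : sumN N (fun _ => 0) = 0.
Proof. induction N; simpl; [lra|]. rewrite IHN. lra. Qed.

Lemma sumN_swap N M f : sumN N (fun i => sumN M (fun j => f i j)) = sumN M (fun j => sumN N (fun i => f i j)).
Proof.
induction N; simpl. { symmetry. apply sumN_zero. }
rewrite IHN. rewrite <- sumN_plus. auto.
Qed.

Lemma sumN_le N f g : (forall i, (i < N)%nat -> f i <= g i) -> sumN N f <= sumN N g.
Proof. induction N; simpl; intros H; [lra|]. assert (H1 := H N (Nat.lt_succ_diag_r N)).
assert (sumN N f <= sumN N g) by (apply IHN; intros; apply H; lia). lra. Qed.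

Lemma sumN_nonneg N f : (forall i, (i < N)%nat -> 0 <= f i) -> 0 <= sumN N f.
Proof. intros H. rewrite <- (sumN_zero N). apply sumN_le; auto. Qed.

Lemma sumN_shift N f : sumN (S N) f = f 0%nat + sumN N (fun i => f (S i)).
Proof. induction N; simpl in *; [lra|]. rewrite IHN. lra. Qed.

Lemma sumN_split p q f : sumN (p + q) f = sumN p f + sumN q (fun i => f (p + i)%nat).
Proof. induction q; simpl. { rewrite Nat.add_0_r. lra. }
rewrite Nat.add_succ_r. simpl. rewrite IHq. lra. Qed.

Lemma sumN_delta N x g : (x < N)%nat ->
  sumN N (fun z => (if Nat.eqb z x then 1 else 0) * g z) = g x.
Proof.
induction N; intros Hx; [lia|]. simpl.
destruct (Nat.eq_dec x N) as [->|ne].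
- rewrite Nat.eqb_refl. rewrite (sumN_ext N _ (fun _ => 0)). rewrite sumN_zero. lra.
  intros i Hi. destruct (Nat.eqb_spec i N); [lia|lra].
- rewrite IHN by lia. destruct (Nat.eqb_spec N x); [lia|lra].
Qed.

Lemma sumN_delta' N x g : (x < N)%nat ->
  sumN N (fun z => g z * (if Nat.eqb x z then 1 else 0)) = g x.
Proof. intros Hx. rewrite <- (sumN_delta N x g Hx). apply sumN_ext. intros i _.
rewrite Nat.eqb_sym. lra. Qed.

Lemma sumN_sq N g : (sumN N g) ^ 2 = sumN N (fun i => sumN N (fun k => g i * g k)).
Proof. replace ((sumN N g)^2) with (sumN N g * sumN N g) by ring.
rewrite <- sumN_scalr. apply sumN_ext. intros i _. rewrite sumN_scal. auto. Qed.

Lemma sumN_mono_len N f : (forall i, 0 <= f i) -> forall K, (K <= N)%nat -> sumN K f <= sumN N f.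
Proof. intros H K HK. replace N with (K + (N - K))%nat by lia. rewrite sumN_split.
assert (0 <= sumN (N - K) (fun i => f (K + i)%nat)) by (apply sumN_nonneg; auto). lra. Qed.

Lemma sumN_delta2 N x g : (x < N)%nat ->
  sumN N (fun z => g z * (if Nat.eqb z x then 1 else 0)) = g x.
Proof. intros Hx. rewrite <- (sumN_delta N x g Hx). apply sumN_ext. intros i _. lra. Qed.


Module MX.
Import all_boot all_algebra Rstruct.
Import GRing.Theory.
Local Open Scope ring_scope.

Lemma sumN_big (N : nat) (f : nat -> R) : sumN N f = (\sum_(i < N) f i)%R.
Proof.
elim: N => [|N IH]; first by rewrite big_ord0.
by rewrite big_ord_recr /= IH.
Qed.

Lemma right_inv_left (N : nat) (B C : nat -> nat -> R) :
  (forall i k, (i < N)%coq_nat -> (k < N)%coq_nat -> sumN N (fun x => Rmult (B i x) (C x k)) = if Nat.eqb i k then R1 else R0) ->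
  forall x y, (x < N)%coq_nat -> (y < N)%coq_nat -> sumN N (fun i => Rmult (C x i) (B i y)) = if Nat.eqb x y then R1 else R0.
Proof.
move=> H x y Hx Hy.
pose Bm := (\matrix_(i < N, j < N) B i j) : 'M[R]_N.
pose Cm := (\matrix_(i < N, j < N) C i j) : 'M[R]_N.
have HBC : (Bm *m Cm = 1%:M)%R.
  apply/matrixP => i k; rewrite !mxE.
  under eq_bigr do rewrite !mxE.
  rewrite -(sumN_big N (fun x => B i x * C x k)).
  rewrite H; try by apply/ltP.
  case: (eqVneq i k) => [->|ne]; first by rewrite Nat.eqb_refl.
  case: Nat.eqb_spec => // E. by move: ne; rewrite (val_inj E) eqxx.
have := mulmx1C HBC => /matrixP /(_ (Ordinal (introT ltP Hx)) (Ordinal (introT ltP Hy))).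
rewrite !mxE. under eq_bigr do rewrite !mxE.
rewrite -(sumN_big N (fun i => C x i * B i y)) => ->.
rewrite /=. case: Nat.eqb_spec => E; case: eqP => //= E'.
- by subst y; case: E'; apply: val_inj.
- by case: E'.
Qed.
End MX.



Section Spec.
Variable c : chain.
Hypothesis Hc : rev_chain c.
Hypothesis Hs : spectral_data c.
Let N := sz c.

Lemma complete x y : (x < N)%nat -> (y < N)%nat ->
  sumN N (fun i => phi c i x * phi c i y * pi c y) = if Nat.eqb x y then 1 else 0.
Proof.
intros Hx Hy.
destruct Hs as [_ [Hon _]].
assert (H0 : forall i k, (i < N)%nat -> (k < N)%nat ->
  sumN N (fun x => phi c i x * (pi c x * phi c k x)) = if Nat.eqb i k then R1 else R0).
{ intros i k Hi Hk. transitivity (if Nat.eqb i k then 1 else 0).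
  2:{ destruct (Nat.eqb i k); reflexivity. }
  rewrite <- (Hon i k Hi Hk). apply sumN_ext. intros; ring. }
assert (H := MX.right_inv_left N (fun i x => phi c i x) (fun x k => pi c x * phi c k x) H0 y x Hy Hx).
simpl in H.
rewrite Nat.eqb_sym. transitivity (if Nat.eqb y x then R1 else R0).
2:{ destruct (Nat.eqb y x); reflexivity. }
rewrite <- H. apply sumN_ext. intros; ring.
Qed.

Lemma powers m x y : (x < N)%nat -> (y < N)%nat ->
  matpow N (gen c) m x y = sumN N (fun i => (- lam c i) ^ m * (phi c i x * phi c i y * pi c y)).
Proof.
revert y. induction m; intros y Hx Hy.
- simpl. rewrite <- complete by auto. apply sumN_ext. intros; ring.
- simpl. unfold matmul.
  transitivity (sumN N (fun z => sumN N (fun i => (- lam c i) ^ m * (phi c i x * phi c i z * pi c z)) * gen c z y)).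
  { apply sumN_ext. intros z Hz. rewrite IHm by auto. auto. }
  rewrite (sumN_ext N _ (fun z => sumN N (fun i => (- lam c i) ^ m * phi c i x * (phi c i z * pi c z * gen c z y)))).
  2:{ intros z Hz. rewrite <- sumN_scalr. apply sumN_ext. intros; ring. }
  rewrite sumN_swap. apply sumN_ext. intros i Hi.
  rewrite sumN_scal.
  destruct Hc as [_ [_ [_ [_ [_ [Hrev _]]]]]].
  destruct Hs as [Heig _].
  rewrite (sumN_ext N _ (fun z => pi c y * (gen c y z * phi c i z))).
  2:{ intros z Hz. rewrite Rmult_assoc. rewrite Hrev by auto. ring. }
  rewrite sumN_scal. rewrite Heig by auto. ring.
Qed.

Lemma is_plus u v a b : infinite_sum u a -> infinite_sum v b -> infinite_sum (fun m => u m + v m) (a + b).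
Proof.
intros Hu Hv e He.
destruct (Hu (e/2)) as [N1 H1]; [lra|]. destruct (Hv (e/2)) as [N2 H2]; [lra|].
exists (max N1 N2). intros n Hn.
assert (E : sum_f_R0 (fun m => u m + v m) n = sum_f_R0 u n + sum_f_R0 v n).
{ clear Hn. induction n; simpl; [auto|]. rewrite IHn. ring. }
rewrite E. unfold Rdist in *.
assert (A1 := H1 n ltac:(pose proof (Nat.le_max_l N1 N2); lia)). assert (A2 := H2 n ltac:(pose proof (Nat.le_max_r N1 N2); lia)).
replace (sum_f_R0 u n + sum_f_R0 v n - (a + b)) with ((sum_f_R0 u n - a) + (sum_f_R0 v n - b)) by ring.
eapply Rle_lt_trans. apply Rabs_triang. lra.
Qed.

Lemma is_scal u a k : infinite_sum u a -> infinite_sum (fun m => u m * k) (a * k).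
Proof.
intros Hu e He.
destruct (Hu (e / (Rabs k + 1))) as [N1 H1].
{ apply Rdiv_lt_0_compat; [lra|]. assert (0 <= Rabs k) by apply Rabs_pos. lra. }
exists N1. intros n Hn.
assert (E : sum_f_R0 (fun m => u m * k) n = sum_f_R0 u n * k).
{ clear Hn. induction n; simpl; [auto|]. rewrite IHn. ring. }
rewrite E. unfold Rdist in *.
replace (sum_f_R0 u n * k - a * k) with ((sum_f_R0 u n - a) * k) by ring.
rewrite Rabs_mult. assert (A1 := H1 n Hn).
assert (0 <= Rabs k) by apply Rabs_pos.
assert (0 <= Rabs (sum_f_R0 u n - a)) by apply Rabs_pos.
apply Rle_lt_trans with (Rabs (sum_f_R0 u n - a) * (Rabs k + 1)). nra.
apply Rmult_lt_reg_r with (/ (Rabs k + 1)). apply Rinv_0_lt_compat; lra.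
rewrite Rmult_assoc, Rinv_r by lra. rewrite Rmult_1_r. exact A1.
Qed.

Lemma is_sumN K (u : nat -> nat -> R) (l : nat -> R) :
  (forall i, (i < K)%nat -> infinite_sum (u i) (l i)) ->
  infinite_sum (fun m => sumN K (fun i => u i m)) (sumN K l).
Proof.
induction K; intros H; simpl.
- intros e He. exists 0%nat. intros n _. unfold Rdist.
  assert (E : sum_f_R0 (fun _ => 0) n = 0). { induction n; simpl; [auto|]. rewrite IHn; ring. }
  rewrite E. rewrite Rminus_0_r, Rabs_R0. lra.
- apply is_plus. apply IHK; intros; apply H; lia. apply H; lia.
Qed.

Lemma exp_series x : infinite_sum (fun m => / INR (fact m) * x ^ m) (exp x).
Proof. unfold exp. destruct (exist_exp x) as [l Hl]. simpl. exact Hl. Qed.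

Lemma is_ext u v l : (forall m, u m = v m) -> infinite_sum u l -> infinite_sum v l.
Proof.
intros E H e He. destruct (H e He) as [N0 H0]. exists N0. intros n Hn.
assert (S : sum_f_R0 v n = sum_f_R0 u n). { clear Hn. induction n; simpl; rewrite ?IHn; rewrite ?E; auto. }
rewrite S. auto.
Qed.

Lemma heat_formula t x y : (x < N)%nat -> (y < N)%nat ->
  heat N (gen c) t x y = sumN N (fun i => exp (- lam c i * t) * (phi c i x * phi c i y * pi c y)).
Proof.
intros Hx Hy.
assert (HS : infinite_sum (fun m => t ^ m / INR (fact m) * matpow N (gen c) m x y)
   (sumN N (fun i => exp (- lam c i * t) * (phi c i x * phi c i y * pi c y)))).
{ eapply is_ext; [| apply (is_sumN N (fun i m => (/ INR (fact m) * (- lam c i * t) ^ m) * (phi c i x * phi c i y * pi c y)))].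
  - intros m. simpl. rewrite powers by auto. unfold Rdiv. rewrite <- sumN_scal. apply sumN_ext.
    intros i _. rewrite Rpow_mult_distr. ring.
  - intros i _. apply is_scal. apply exp_series. }
unfold heat.
apply (uniqueness_sum (fun m => t ^ m / INR (fact m) * matpow N (gen c) m x y)); auto.
apply epsilon_spec. eexists; eauto.
Qed.

Lemma muH_formula t y : (y < N)%nat ->
  muH c t y = sumN N (fun i => exp (- lam c i * t) * mu_phi c i * phi c i y * pi c y).
Proof.
intros Hy. unfold muH, mu_phi. fold N.
rewrite (sumN_ext N _ (fun x => sumN N (fun i => mu c x * (exp (- lam c i * t) * (phi c i x * phi c i y * pi c y))))).
2:{ intros x Hx. rewrite heat_formula by auto. rewrite <- sumN_scal. auto. }
rewrite sumN_swap. apply sumN_ext. intros i _.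
rewrite <- sumN_scal. rewrite <- !sumN_scalr. apply sumN_ext. intros; ring.
Qed.

Let M := (N - 1)%nat.

Lemma mu_phi0 : mu_phi c 0 = 1.
Proof.
unfold mu_phi. destruct Hs as [_ [_ [Hp0 _]]]. destruct Hc as [_ [_ [_ [_ [_ [_ [_ Hmu]]]]]]].
rewrite <- Hmu. apply sumN_ext. intros x Hx. rewrite Hp0 by auto. ring.
Qed.

Lemma NS : N = S M.
Proof. destruct Hc as [H1 _]. unfold M. fold N in H1. lia. Qed.

Lemma ratio_formula t y : (y < N)%nat ->
  muH c t y / pi c y - 1 = sumN M (fun i => exp (- lam c (S i) * t) * mu_phi c (S i) * phi c (S i) y).
Proof.
intros Hy. rewrite muH_formula by auto.
assert (Hpi : 0 < pi c y). { destruct Hc as [_ [_ [_ [Hp _]]]]. auto. }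
unfold Rdiv. rewrite <- sumN_scalr. rewrite NS. rewrite sumN_shift.
destruct Hs as [_ [_ [Hp0 [Hl0 _]]]]. assert (Hy' : (y < sz c)%nat) by exact Hy. assert (H0' : (0 < sz c)%nat) by lia.
rewrite Hp0, Hl0, mu_phi0 by auto.
rewrite Ropp_0, Rmult_0_l, exp_0.
replace (1 * 1 * 1 * pi c y * / pi c y) with 1 by (field; lra).
ring_simplify. apply sumN_ext. intros i _. field. lra.
Qed.

Definition ff (t : R) := sumN M (fun i => mu_phi c (S i) ^ 2 * exp (-2 * lam c (S i) * t)).

Lemma d2_sum t : sumN N (fun y => (muH c t y / pi c y - 1) ^ 2 * pi c y) = ff t.
Proof.
rewrite (sumN_ext N _ (fun y => sumN M (fun i => sumN M (fun k =>
   (exp (- lam c (S i) * t) * mu_phi c (S i)) * (exp (- lam c (S k) * t) * mu_phi c (S k)) *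
   (pi c y * phi c (S i) y * phi c (S k) y))))).
2:{ intros y Hy. rewrite ratio_formula by auto. rewrite sumN_sq. rewrite <- sumN_scalr.
    apply sumN_ext. intros i _. rewrite <- sumN_scalr. apply sumN_ext. intros; ring. }
rewrite sumN_swap. unfold ff. apply sumN_ext. intros i Hi.
rewrite sumN_swap. 
rewrite (sumN_ext M _ (fun k => (exp (- lam c (S i) * t) * mu_phi c (S i)) * (exp (- lam c (S k) * t) * mu_phi c (S k)) * (if Nat.eqb i k then 1 else 0))).
2:{ intros k Hk. rewrite sumN_scal. destruct Hs as [_ [Hon _]]. rewrite Hon.
    2,3: assert (NS' : sz c = S M) by apply NS; rewrite NS'; lia. simpl. auto. }
rewrite sumN_delta' by auto.
replace (-2 * lam c (S i) * t) with (- lam c (S i) * t + - lam c (S i) * t) by ring.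
rewrite exp_plus. ring.
Qed.

Lemma d2_formula t : Defs.d2 c t = sqrt (ff t).
Proof. unfold Defs.d2. fold N. rewrite d2_sum. auto. Qed.

Lemma muH0 y : (y < N)%nat -> muH c 0 y = mu c y.
Proof.
intros Hy. rewrite muH_formula by auto. unfold mu_phi.
rewrite (sumN_ext N _ (fun i => sumN N (fun x => mu c x * (phi c i x * phi c i y * pi c y)))).
2:{ intros i _. rewrite Rmult_0_r, exp_0, Rmult_1_l. rewrite <- !sumN_scalr. apply sumN_ext. intros; ring. }
rewrite sumN_swap.
rewrite (sumN_ext N _ (fun x => mu c x * (if Nat.eqb x y then 1 else 0))).
2:{ intros x Hx. rewrite sumN_scal. rewrite complete by auto. auto. }
apply sumN_delta2. auto.
Qed.

Lemma chi2_formula : chi2 c = 1 + psum c M.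
Proof.
assert (H := d2_sum 0).
assert (E : ff 0 = psum c M).
{ unfold ff, psum. apply sumN_ext. intros. rewrite Rmult_0_r, exp_0. ring. }
rewrite E in H. rewrite <- H. unfold chi2. fold N.
destruct Hc as [_ [_ [_ [Hp [Hpi1 [_ [_ Hmu]]]]]]].
rewrite (sumN_ext N (fun y => (muH c 0 y / pi c y - 1) ^ 2 * pi c y) (fun y => mu c y ^ 2 / pi c y - 2 * mu c y + pi c y)).
2:{ intros y Hy. rewrite muH0 by auto. assert (0 < pi c y) by auto. field. lra. }
rewrite !sumN_plus. rewrite sumN_minus. rewrite sumN_scal. fold N in Hmu, Hpi1. rewrite Hmu, Hpi1. ring.
Qed.

End Spec.


Lemma exp_le_mono x y : x <= y -> exp x <= exp y.
Proof. intros H. destruct (Req_dec x y) as [->|ne]; [lra|]. left. apply exp_increasing. lra. Qed.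

Lemma exp_le_inv x y : exp x <= exp y -> x <= y.
Proof. intros H. destruct (Rle_dec x y); auto. assert (exp y < exp x) by (apply exp_increasing; lra). lra. Qed.

Lemma exp_ge1 x : 0 <= x -> 1 <= exp x.
Proof. intros. rewrite <- exp_0. apply exp_le_mono. auto. Qed.

Lemma exp_le1 x : x <= 0 -> exp x <= 1.
Proof. intros. rewrite <- exp_0. apply exp_le_mono. auto. Qed.

Lemma js_bounds f cc j fuel : (j <= jsearch f cc j fuel <= j + fuel)%nat.
Proof. revert j. induction fuel; intros j; simpl; [lia|].
destruct (Rlt_dec cc (f j)); [lia|]. specialize (IHfuel (S j)). lia. Qed.

Lemma js_before f cc j fuel k : (j <= k < jsearch f cc j fuel)%nat -> ~ cc < f k.
Proof. revert j. induction fuel; intros j Hk; simpl in *; [lia|].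
destruct (Rlt_dec cc (f j)); [lia|]. destruct (Nat.eq_dec k j) as [->|ne]; auto.
apply (IHfuel (S j)). lia. Qed.

Lemma js_found f cc j fuel : (jsearch f cc j fuel < j + fuel)%nat -> cc < f (jsearch f cc j fuel).
Proof. revert j. induction fuel; intros j Hk; simpl in *; [lia|].
destruct (Rlt_dec cc (f j)); auto. apply IHfuel. lia. Qed.

Lemma maxfrom_ge g j fuel k : (j <= k <= j + fuel)%nat -> g k <= maxfrom g j fuel.
Proof. revert j. induction fuel; intros j Hk; simpl.
- replace k with j by lia. lra.
- destruct (Nat.eq_dec k j) as [->|ne]. apply Rmax_l.
  eapply Rle_trans; [apply (IHfuel (S j)); lia|apply Rmax_r]. Qed.

Lemma maxfrom_att g j fuel : exists k, (j <= k <= j + fuel)%nat /\ maxfrom g j fuel = g k.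
Proof. revert j. induction fuel; intros j; simpl.
- exists j. split; [lia|auto].
- destruct (IHfuel (S j)) as [k [Hk E]]. apply Rmax_case.
  + exists j. split; [lia|auto].
  + exists k. split; [lia|auto]. Qed.

Lemma Qineq y r : 0 <= y -> 1 <= r -> 1 - exp (- (r * y)) <= 2 * r * (1 - exp (- y)).
Proof.
intros Hy Hr.
assert (E1 := exp_ineq1_le (- (r * y))).
assert (E2 := exp_ineq1_le y).
assert (Hey : 0 < exp y) by apply exp_pos.
assert (Hl : 1 - exp (- y) >= y / (1 + y)).
{ rewrite exp_Ropp. apply Rle_ge. apply Rmult_le_reg_r with ((1 + y) * exp y). nra.
  unfold Rdiv. replace (y * / (1 + y) * ((1 + y) * exp y)) with (y * exp y) by (field; lra).
  replace ((1 - / exp y) * ((1 + y) * exp y)) with ((exp y - 1) * (1 + y)) by (field; lra). nra. }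
assert (0 < exp (- (r * y))) by apply exp_pos.
destruct (Rle_dec y 1).
- assert (y / (1 + y) >= y / 2).
  { apply Rle_ge. unfold Rdiv. apply Rmult_le_compat_l; auto. apply Rinv_le_contravar; lra. }
  nra.
- assert (y / (1 + y) >= 1 / 2).
  { apply Rle_ge. apply Rmult_le_reg_r with (2 * (1 + y)). lra.
    unfold Rdiv. replace (y * / (1 + y) * (2 * (1 + y))) with (2 * y) by (field; lra). lra. }
  nra.
Qed.

Set Default Proof Using "All".
Section Abs.
Variable c : chain.
Let M := (sz c - 1)%nat.
Hypothesis HM : forall i k, (1 <= i)%nat -> (i <= k)%nat -> (k <= M)%nat -> lam c i <= lam c k.
Hypothesis HP : (1 <= M)%nat -> 0 < lam c 1.

Lemma lampos i : (1 <= i <= M)%nat -> 0 < lam c i.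
Proof. intros H. assert (0 < lam c 1) by (apply HP; lia). assert (lam c 1 <= lam c i) by (apply HM; lia). lra. Qed.

Definition A j := psum c j.
Definition term i t := mu_phi c (S i) ^ 2 * exp (-2 * lam c (S i) * t).

Lemma psum_S j : psum c (S j) = psum c j + mu_phi c (S j) ^ 2.
Proof. reflexivity. Qed.

Lemma a_nonneg i : 0 <= mu_phi c (S i) ^ 2.
Proof. apply pow2_ge_0. Qed.

Lemma psum_nonneg j : 0 <= psum c j.
Proof. unfold psum. apply sumN_nonneg. intros. apply a_nonneg. Qed.

Lemma psum_mono j k : (j <= k)%nat -> psum c j <= psum c k.
Proof. intros H. unfold psum. apply sumN_mono_len; auto. intros. apply a_nonneg. Qed.

Lemma term_nonneg i t : 0 <= term i t.
Proof. unfold term. assert (0 < exp (-2 * lam c (S i) * t)) by apply exp_pos. assert (Ha:=a_nonneg i). nra. Qed.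

Lemma ff_def t : ff c t = sumN M (fun i => term i t).
Proof. reflexivity. Qed.

Lemma ff_nonneg t : 0 <= ff c t.
Proof. rewrite ff_def. apply sumN_nonneg. intros; apply term_nonneg. Qed.

Lemma jn_props cc : 0 < cc -> cc < psum c M ->
  (1 <= jn c cc <= M)%nat /\ cc < psum c (jn c cc) /\ psum c (jn c cc - 1) <= cc.
Proof.
intros H0 H1. unfold jn. fold M.
pose proof (js_bounds (psum c) cc 1 M) as Hb.
set (j0 := jsearch (psum c) cc 1 M) in *.
assert (HM1 : (1 <= M)%nat). { destruct (Nat.eq_dec M 0) as [E|NE]; [rewrite E in H1; unfold psum in H1; simpl in H1; lra|lia]. }
assert (Hlt : (j0 < 1 + M)%nat).
{ destruct (Nat.eq_dec j0 (1 + M)) as [E|ne]; [|lia].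
  exfalso. apply (js_before (psum c) cc 1 M M); [fold j0; lia|auto]. }
split; [lia|]. split. apply js_found. fold j0. lia.
destruct (Nat.eq_dec j0 1) as [E|ne].
- rewrite E. unfold psum. simpl. lra.
- apply Rnot_lt_le. apply (js_before (psum c) cc 1 M). fold j0. lia.
Qed.

Lemma jn_mono c1 c2 : 0 < c1 -> c1 <= c2 -> c2 < psum c M -> (jn c c1 <= jn c c2)%nat.
Proof.
intros H0 H1 H2.
destruct (jn_props c2) as [B2 [L2 _]]; [lra|auto|].
destruct (Nat.le_gt_cases (jn c c1) (jn c c2)) as [|Hlt]; auto.
exfalso. unfold jn in Hlt. apply (js_before (psum c) c1 1 (sz c - 1) (jn c c2)).
split; [lia|auto]. fold (jn c c2) in *. lra.
Qed.

Definition gt (j : nat) := ln (1 + psum c j) / (2 * lam c j).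

Lemma taun_def cc : taun c cc = maxfrom gt (jn c cc) (M - jn c cc).
Proof. reflexivity. Qed.

Lemma tau_props cc : 0 < cc -> cc < psum c M ->
  (forall k, (jn c cc <= k <= M)%nat -> 1 + psum c k <= exp (2 * lam c k * taun c cc)) /\
  (exists k, (jn c cc <= k <= M)%nat /\ 1 + psum c k = exp (2 * lam c k * taun c cc)) /\
  0 <= taun c cc.
Proof.
intros H0 H1. destruct (jn_props cc H0 H1) as [Hj [Hc1 Hc2]].
rewrite taun_def.
assert (Ha : forall k, (jn c cc <= k <= M)%nat -> 1 + psum c k <= exp (2 * lam c k * maxfrom gt (jn c cc) (M - jn c cc))).
{ intros k Hk. assert (Hg := maxfrom_ge gt (jn c cc) (M - jn c cc) k ltac:(lia)).
  unfold gt in Hg. assert (Hl : 0 < lam c k) by (apply lampos; lia).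
  assert (Hp := psum_nonneg k).
  rewrite <- (exp_ln (1 + psum c k)) by lra. apply exp_le_mono.
  apply Rmult_le_compat_r with (r := 2 * lam c k) in Hg; [|lra].
  unfold Rdiv in Hg. rewrite Rmult_assoc, Rinv_l in Hg by lra. unfold gt. lra. }
split; [auto|]. split.
- destruct (maxfrom_att gt (jn c cc) (M - jn c cc)) as [k [Hk E]].
  exists k. split; [lia|]. rewrite E. unfold gt.
  assert (Hl : 0 < lam c k) by (apply lampos; lia). assert (Hp := psum_nonneg k).
  replace (2 * lam c k * (ln (1 + psum c k) / (2 * lam c k))) with (ln (1 + psum c k)) by (field; lra).
  rewrite exp_ln by lra. auto.
- assert (H := Ha (jn c cc) ltac:(lia)). assert (Hp := psum_nonneg (jn c cc)).
  assert (Hl : 0 < lam c (jn c cc)) by (apply lampos; lia).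
  assert (0 <= 2 * lam c (jn c cc) * maxfrom gt (jn c cc) (M - jn c cc)).
  { apply exp_le_inv. rewrite exp_0. lra. }
  nra.
Qed.

Lemma tau_mono c1 c2 : 0 < c1 -> c1 <= c2 -> c2 < psum c M -> taun c c2 <= taun c c1.
Proof.
intros H0 H1 H2. assert (Hj := jn_mono c1 c2 H0 H1 H2).
destruct (jn_props c2) as [B2 _]; [lra|auto|].
rewrite (taun_def c2). destruct (maxfrom_att gt (jn c c2) (M - jn c c2)) as [k [Hk E]].
rewrite E. rewrite taun_def. apply maxfrom_ge. lia.
Qed.

Lemma ff_LB t k : 0 <= t -> (1 <= k <= M)%nat -> psum c k * exp (-2 * lam c k * t) <= ff c t.
Proof.
intros Ht Hk. rewrite ff_def.
apply Rle_trans with (sumN k (fun i => term i t)).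
2:{ apply sumN_mono_len; [intros; apply term_nonneg|lia]. }
unfold psum. rewrite <- sumN_scalr. apply sumN_le. intros i Hi. unfold term.
apply Rmult_le_compat_l. apply a_nonneg. apply exp_le_mono.
assert (lam c (S i) <= lam c k) by (apply HM; lia). nra.
Qed.

Lemma ff_lower cc t : 0 < cc -> cc < psum c M -> 0 <= t -> t <= taun c cc ->
  cc / (1 + cc) * exp (2 * lam c (jn c cc) * (taun c cc - t)) <= ff c t.
Proof.
intros H0 H1 Ht Ht2. destruct (jn_props cc H0 H1) as [Hj [Hc1 Hc2]].
destruct (tau_props cc H0 H1) as [_ [[k [Hk Ek]] Htau]].
set (tau := taun c cc) in *.
eapply Rle_trans; [|apply (ff_LB t k); auto; lia].
assert (Hpk : psum c (jn c cc) <= psum c k) by (apply psum_mono; lia).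
assert (Hlk : lam c (jn c cc) <= lam c k) by (apply HM; lia).
assert (E2 : psum c k * exp (-2 * lam c k * t) = psum c k / (1 + psum c k) * exp (2 * lam c k * (tau - t))).
{ replace (2 * lam c k * (tau - t)) with (2 * lam c k * tau + -2 * lam c k * t) by ring.
  rewrite exp_plus. rewrite <- Ek. field. lra. }
rewrite E2. apply Rmult_le_compat.
- apply Rlt_le. apply Rdiv_lt_0_compat; lra.
- left; apply exp_pos.
- apply Rmult_le_reg_r with ((1 + cc) * (1 + psum c k)). nra.
  unfold Rdiv. replace (cc * / (1 + cc) * ((1 + cc) * (1 + psum c k))) with (cc * (1 + psum c k)) by (field; lra).
  replace (psum c k * / (1 + psum c k) * ((1 + cc) * (1 + psum c k))) with (psum c k * (1 + cc)) by (field; lra).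
  nra.
- apply exp_le_mono. assert (0 <= lam c (jn c cc)) by (left; apply lampos; lia). nra.
Qed.


Definition head j0 t := sumN (j0 - 1) (fun i => term i t).
Definition tail j0 t := sumN (M - (j0 - 1)) (fun i => term (j0 - 1 + i) t).

Lemma ff_split j0 t : (1 <= j0 <= M)%nat -> ff c t = head j0 t + tail j0 t.
Proof.
intros H. rewrite ff_def. unfold head, tail.
replace M with ((j0 - 1) + (M - (j0 - 1)))%nat at 1 by lia. apply sumN_split.
Qed.

Lemma head_nonneg j0 t : 0 <= head j0 t.
Proof. apply sumN_nonneg. intros; apply term_nonneg. Qed.

Lemma tail_nonneg j0 t : 0 <= tail j0 t.
Proof. apply sumN_nonneg. intros; apply term_nonneg. Qed.

Lemma tail_le j0 t : (1 <= j0 <= M)%nat -> tail j0 t <= ff c t.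
Proof. intros H. rewrite (ff_split j0 t H). assert (H1 := head_nonneg j0 t). lra. Qed.

Lemma sum_terms_le p t : 0 <= t -> (p <= M)%nat -> sumN p (fun i => term i t) <= psum c p.
Proof.
intros Ht Hp. unfold psum. apply sumN_le. intros i Hi. unfold term.
assert (Hl : 0 < lam c (S i)) by (apply lampos; lia).
assert (exp (-2 * lam c (S i) * t) <= 1) by (apply exp_le1; nra).
assert (Ha := a_nonneg i). nra.
Qed.

Lemma head_bound0 j0 t : 0 <= t -> (1 <= j0 <= M)%nat -> head j0 t <= psum c (j0 - 1).
Proof. intros. apply sum_terms_le; auto. lia. Qed.

Lemma head_bound j0 k t : 0 <= t -> (1 <= k)%nat -> (k <= j0)%nat -> (j0 <= M)%nat ->
  head j0 t <= psum c (k - 1) + psum c (j0 - 1) * exp (-2 * lam c k * t).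
Proof.
intros Ht Hk Hkj HjM. unfold head.
replace (j0 - 1)%nat with ((k - 1) + (j0 - k))%nat by lia.
rewrite sumN_split. unfold psum at 2. rewrite sumN_split. fold (psum c (k - 1)).
assert (H1 : sumN (k - 1) (fun i => term i t) <= psum c (k - 1)) by (apply sum_terms_le; auto; lia).
assert (H2 : sumN (j0 - k) (fun i => term (k - 1 + i) t) <=
   sumN (j0 - k) (fun i => mu_phi c (S (k - 1 + i)) ^ 2) * exp (-2 * lam c k * t)).
{ rewrite <- sumN_scalr. apply sumN_le. intros i Hi. unfold term.
  apply Rmult_le_compat_l. apply a_nonneg. apply exp_le_mono.
  assert (lam c k <= lam c (S (k - 1 + i))) by (apply HM; lia). nra. }
assert (Hp := psum_nonneg (k - 1)). assert (He : 0 < exp (-2 * lam c k * t)) by apply exp_pos.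
assert (0 <= psum c (k - 1) * exp (-2 * lam c k * t)) by nra.
unfold psum in *. lra.
Qed.

Lemma tail_decay j0 t s : 0 <= s -> (1 <= j0 <= M)%nat ->
  tail j0 (t + s) <= exp (-2 * lam c j0 * s) * tail j0 t.
Proof.
intros Hs Hj. unfold tail. rewrite <- sumN_scal. apply sumN_le. intros i Hi. unfold term.
replace (-2 * lam c (S (j0 - 1 + i)) * (t + s)) with (-2 * lam c (S (j0 - 1 + i)) * t + -2 * lam c (S (j0 - 1 + i)) * s) by ring.
rewrite exp_plus.
assert (exp (-2 * lam c (S (j0 - 1 + i)) * s) <= exp (-2 * lam c j0 * s)).
{ apply exp_le_mono. assert (lam c j0 <= lam c (S (j0 - 1 + i))) by (apply HM; lia). nra. }
assert (Ha := a_nonneg (j0 - 1 + i)). assert (0 < exp (-2 * lam c (S (j0 - 1 + i)) * t)) by apply exp_pos.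
assert (0 < exp (-2 * lam c (S (j0 - 1 + i)) * s)) by apply exp_pos.
assert (0 <= mu_phi c (S (j0 - 1 + i)) ^ 2 * exp (-2 * lam c (S (j0 - 1 + i)) * t)) by nra.
nra.
Qed.

Lemma ff_mono t t' : t <= t' -> ff c t' <= ff c t.
Proof.
intros H. rewrite !ff_def. apply sumN_le. intros i Hi. unfold term.
apply Rmult_le_compat_l. apply a_nonneg. apply exp_le_mono.
assert (0 < lam c (S i)) by (apply lampos; lia). nra.
Qed.

Lemma exp_split3 a b : exp (a + b) = exp a * exp b.
Proof. apply exp_plus. Qed.

Lemma tail_abel j0 tau u : (1 <= j0 <= M)%nat -> 0 <= tau -> 0 < u ->
  (forall k, (j0 <= k <= M)%nat -> 1 + psum c k <= exp (2 * lam c k * tau)) ->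
  tail j0 (tau + u) <= (1 + 2 * (tau + u) / u) * exp (-2 * lam c j0 * u).
Proof.
intros Hj Htau Hu Hk.
set (t := tau + u). set (r := t / u).
assert (Hr : 1 <= r). { unfold r, t. apply Rmult_le_reg_r with u; auto. unfold Rdiv. rewrite Rmult_assoc, Rinv_l by lra. lra. }
set (E0 := exp (-2 * lam c j0 * u)).
assert (Claim : forall d, (j0 + d <= M)%nat ->
  sumN (S d) (fun i => term (j0 - 1 + i) t) <=
  psum c (j0 + d) * exp (-2 * lam c (j0 + d) * t) + 2 * r * (E0 - exp (-2 * lam c (j0 + d) * u))).
{ induction d; intros Hd.
  - simpl. replace (j0 + 0)%nat with j0 by lia. unfold term. replace (S (j0 - 1 + 0)) with j0 by lia.
    replace (psum c j0) with (psum c (j0 - 1) + mu_phi c j0 ^ 2).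
    2:{ clear -Hj HM HP. destruct j0 as [|j]; [lia|]. replace (S j - 1)%nat with j by lia. rewrite psum_S. auto. }
    unfold E0. assert (Hp := psum_nonneg (j0 - 1)). assert (0 < exp (-2 * lam c j0 * t)) by apply exp_pos.
    nra.
  - assert (IH := IHd ltac:(lia)).
    change (sumN (S (S d)) (fun i => term (j0 - 1 + i) t)) with (sumN (S d) (fun i => term (j0 - 1 + i) t) + term (j0 - 1 + S d) t).
    set (SS := sumN (S d) (fun i => term (j0 - 1 + i) t)) in *.
    set (K := (j0 + d)%nat) in *. assert (HK : K = (j0 + d)%nat) by reflexivity.
    assert (Ht : 0 < t) by (unfold t; lra).
    replace (j0 - 1 + S d)%nat with K by lia. replace (j0 + S d)%nat with (S K) by lia.
    rewrite psum_S.
    set (aK := mu_phi c (S K) ^ 2).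
    change (term K t) with (aK * exp (-2 * lam c (S K) * t)).
    set (d0 := lam c (S K) - lam c K).
    assert (Hd0 : 0 <= d0). { unfold d0. assert (lam c K <= lam c (S K)) by (apply HM; lia). lra. }
    set (X := exp (-2 * lam c K * t)). set (Y := exp (-2 * d0 * t)).
    set (U := exp (-2 * lam c K * u)). set (V := exp (-2 * d0 * u)).
    set (W := exp (2 * lam c K * tau)).
    assert (E1 : exp (-2 * lam c (S K) * t) = X * Y).
    { unfold X, Y. rewrite <- exp_plus. f_equal. unfold d0. ring. }
    assert (E2 : exp (-2 * lam c (S K) * u) = U * V).
    { unfold U, V. rewrite <- exp_plus. f_equal. unfold d0. ring. }
    assert (E3 : W * X = U).
    { unfold W, X, U. rewrite <- exp_plus. f_equal. unfold t. ring. }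
    rewrite E1, E2.
    assert (HW : 1 + psum c K <= W) by (apply Hk; lia).
    assert (HY : Y <= 1) by (apply exp_le1; nra).
    assert (HY0 : 0 < Y) by apply exp_pos. assert (HX0 : 0 < X) by apply exp_pos.
    assert (HU0 : 0 < U) by apply exp_pos.
    assert (HQ : 1 - Y <= 2 * r * (1 - V)).
    { unfold Y, V. replace (-2 * d0 * t) with (- (r * (2 * d0 * u))).
      replace (-2 * d0 * u) with (- (2 * d0 * u)) by ring. apply Qineq; nra.
      unfold r. field. lra. }
    assert (Ha := a_nonneg K). fold aK in Ha.
    assert (Hp := psum_nonneg K).
    assert (L1 : psum c K * X * (1 - Y) <= U * (1 - Y)).
    { rewrite <- E3. apply Rmult_le_compat_r; [lra|]. apply Rmult_le_compat_r; lra. }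
    assert (L2 : U * (1 - Y) <= U * (2 * r * (1 - V))) by (apply Rmult_le_compat_l; lra).
    fold X U in IH. nra. }
assert (HC := Claim (M - j0)%nat ltac:(lia)).
replace (S (M - j0)) with (M - (j0 - 1))%nat in HC by lia.
replace (j0 + (M - j0))%nat with M in HC by lia.
unfold tail. fold t. eapply Rle_trans; [exact HC|].
assert (HW : 1 + psum c M <= exp (2 * lam c M * tau)) by (apply Hk; lia).
assert (E3 : exp (2 * lam c M * tau) * exp (-2 * lam c M * t) = exp (-2 * lam c M * u)).
{ rewrite <- exp_plus. f_equal. unfold t. ring. }
assert (HEM : exp (-2 * lam c M * u) <= E0).
{ unfold E0. apply exp_le_mono. assert (lam c j0 <= lam c M) by (apply HM; lia). nra. }
assert (0 < exp (-2 * lam c M * t)) by apply exp_pos.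
assert (0 < exp (-2 * lam c M * u)) by apply exp_pos.
assert (psum c M * exp (-2 * lam c M * t) <= exp (-2 * lam c M * u)).
{ rewrite <- E3. apply Rmult_le_compat_r; lra. }
replace (2 * t / u) with (2 * r) by (unfold r; field; lra).
fold E0. nra.
Qed.

End Abs.



Definition good (c : chain) := rev_chain c /\ spectral_data c.

Lemma good_HM c : good c -> forall i k, (1 <= i)%nat -> (i <= k)%nat -> (k <= sz c - 1)%nat -> lam c i <= lam c k.
Proof. intros [Hc Hs] i k H1 H2 H3. destruct Hc as [Hsz _].
destruct Hs as [_ [_ [_ [_ [_ Hm]]]]]. apply Hm; lia. Qed.

Lemma good_HP c : good c -> (1 <= sz c - 1)%nat -> 0 < lam c 1.
Proof. intros [Hc Hs] H. destruct Hs as [_ [_ [_ [_ [Hp _]]]]]. apply Hp; lia. Qed.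

Lemma good_d2 c t : good c -> Defs.d2 c t = sqrt (ff c t).
Proof. intros [Hc Hs]. apply d2_formula; auto. Qed.

Lemma good_chi2 c : good c -> chi2 c = 1 + psum c (sz c - 1).
Proof. intros [Hc Hs]. apply chi2_formula; auto. Qed.

Lemma cont_sumN n (h : nat -> R -> R) : (forall i, continuity (h i)) -> continuity (fun t => sumN n (fun i => h i t)).
Proof.
induction n; intros H; simpl.
- apply continuity_const. intros x y; auto.
- apply (continuity_plus (fun t => sumN n (fun i => h i t)) (h n)); auto.
Qed.

Lemma ff_cont c : continuity (ff c).
Proof.
unfold ff. apply (cont_sumN _ (fun i t => mu_phi c (S i) ^ 2 * exp (-2 * lam c (S i) * t))).
intros i. reg.
Qed.

Lemma sqrt_le_iff x e : 0 <= x -> 0 < e -> (sqrt x <= e <-> x <= e ^ 2).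
Proof.
intros Hx He. split; intros H.
- rewrite <- (pow2_sqrt x Hx). assert (0 <= sqrt x) by apply sqrt_pos. nra.
- rewrite <- (sqrt_pow2 e) by lra. apply sqrt_le_1_alt. auto.
Qed.

Lemma sqrt_gt_iff x e : 0 <= x -> 0 < e -> (e < sqrt x <-> e ^ 2 < x).
Proof.
intros Hx He. split; intros H.
- destruct (Rlt_dec (e ^ 2) x) as [|n]; auto. exfalso. apply Rnot_lt_le in n. apply (proj2 (sqrt_le_iff x e Hx He)) in n. lra.
- destruct (Rlt_dec e (sqrt x)) as [|n]; auto. exfalso. apply Rnot_lt_le in n. apply (proj1 (sqrt_le_iff x e Hx He)) in n. lra.
Qed.

Section T2s.
Variable c : chain.
Hypothesis G : good c.
Let M := (sz c - 1)%nat.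
Let HM := good_HM c G.
Let HP := good_HP c G.

Lemma ff_decay1 t : 0 <= t -> (1 <= M)%nat -> ff c t <= exp (-2 * lam c 1 * t) * ff c 0.
Proof.
intros Ht HM1.
rewrite (ff_split c HM HP 1 t) by lia. rewrite (ff_split c HM HP 1 0) by lia.
unfold head. simpl. rewrite !Rplus_0_l.
replace t with (0 + t) at 1 by ring. apply tail_decay; auto; lia.
Qed.

Lemma T2_exists e2 : 0 < e2 ->
  exists T, 0 <= T /\ ff c T <= e2 /\ forall t : R, 0 <= t -> ff c t <= e2 -> T <= t.
Proof.
intros He.
destruct (Rle_dec (ff c 0) e2) as [H0|H0].
{ exists 0. split; [lra|]. split; auto. }
assert (HM1 : (1 <= M)%nat).
{ destruct (Nat.eq_dec M 0) as [E|]; [|lia]. exfalso. unfold ff in H0. fold M in H0. rewrite E in H0. simpl in H0. lra. }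
set (g0 := ff c 0). assert (Hl1 : 0 < lam c 1) by (apply HP; auto).
set (B := g0 / (2 * lam c 1 * e2)).
assert (HB0 : 0 < B) by (unfold B; apply Rdiv_lt_0_compat; [unfold g0; lra|nra]).
assert (HgB : ff c B <= e2).
{ eapply Rle_trans. apply ff_decay1; auto; lra.
  assert (Hx := exp_ineq1_le (2 * lam c 1 * B)).
  assert (Ex : 2 * lam c 1 * B = g0 / e2) by (unfold B; field; lra).
  replace (-2 * lam c 1 * B) with (- (2 * lam c 1 * B)) by ring.
  rewrite exp_Ropp. rewrite Ex in *. fold g0.
  assert (0 < g0 / e2) by (apply Rdiv_lt_0_compat; unfold g0; lra).
  apply Rle_trans with (g0 / (g0 / e2)).
  - unfold Rdiv at 1. rewrite Rmult_comm. apply Rmult_le_compat_l. unfold g0; lra.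
    apply Rinv_le_contravar; lra.
  - right. field. split; unfold g0; lra. }
set (E := fun t => 0 <= t /\ e2 < ff c t).
assert (HEb : bound E).
{ exists B. intros t [Ht1 Ht2]. destruct (Rle_dec t B) as [|n]; auto.
  assert (ff c t <= ff c B) by (apply (ff_mono c HM HP); lra). lra. }
assert (HE0 : E 0). { split; [lra|]. lra. }
destruct (completeness E HEb (ex_intro _ 0 HE0)) as [m [Hub Hlub]].
assert (Hm0 : 0 <= m) by (apply Hub; auto).
exists m. split; auto. split.
- destruct (Rle_dec (ff c m) e2) as [|n]; auto. exfalso.
  assert (Hc := ff_cont c m). unfold continuity_pt, continue_in, limit1_in, limit_in in Hc.
  destruct (Hc (ff c m - e2)) as [del [Hdel Hd]]; [lra|].
  assert (Hx : E (m + del / 2)).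
  { split; [lra|]. assert (Hd' := Hd (m + del / 2)). simpl in Hd'. unfold Rdist in Hd'.
    assert (Rabs (ff c (m + del / 2) - ff c m) < ff c m - e2).
    { apply Hd'. split. split. constructor. lra. unfold Rdist. replace (m + del / 2 - m) with (del / 2) by ring.
      rewrite Rabs_pos_eq; lra. }
    apply Rabs_def2 in H. lra. }
  assert (m + del / 2 <= m) by (apply Hub; auto). lra.
- intros t Ht Hft. apply Hlub. intros s [Hs1 Hs2].
  destruct (Rle_dec s t) as [|n]; auto.
  assert (ff c s <= ff c t) by (apply (ff_mono c HM HP); lra). lra.
Qed.

Lemma T2_spec eps : 0 < eps ->
  0 <= T2 c eps /\ ff c (T2 c eps) <= eps ^ 2 /\ forall t : R, 0 <= t -> ff c t <= eps ^ 2 -> T2 c eps <= t.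
Proof.
intros He.
assert (Hex : exists T, 0 <= T /\ Defs.d2 c T <= eps /\ forall t : R, 0 <= t -> Defs.d2 c t <= eps -> T <= t).
{ destruct (T2_exists (eps ^ 2)) as [T [H1 [H2 H3]]]. nra.
  exists T. split; auto. rewrite good_d2 by auto. split.
  apply sqrt_le_iff; auto. apply (ff_nonneg c HM HP).
  intros t Ht Hd. apply H3; auto. rewrite good_d2 in Hd by auto. apply sqrt_le_iff in Hd; auto. apply (ff_nonneg c HM HP). }
assert (HS := epsilon_spec (inhabits 0) _ Hex). fold (T2 c eps) in HS.
destruct HS as [H1 [H2 H3]]. rewrite good_d2 in H2 by auto. apply sqrt_le_iff in H2; [|apply (ff_nonneg c HM HP)|auto].
split; auto. split; auto. intros t Ht Hf. apply H3; auto. rewrite good_d2 by auto. apply sqrt_le_iff; auto. apply (ff_nonneg c HM HP).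
Qed.

Lemma T2_ge eps t : 0 < eps -> eps ^ 2 < ff c t -> t <= T2 c eps.
Proof.
intros He H. destruct (T2_spec eps He) as [_ [H2 _]].
destruct (Rle_dec t (T2 c eps)) as [|n]; auto. exfalso.
assert (ff c t <= ff c (T2 c eps)) by (apply (ff_mono c HM HP); lra). lra.
Qed.

End T2s.


Definition ev (P : nat -> Prop) := exists N0, forall n, (N0 <= n)%nat -> P n.

Lemma ev_and P Q : ev P -> ev Q -> ev (fun n => P n /\ Q n).
Proof. intros [N1 H1] [N2 H2]. exists (N1 + N2)%nat. intros n Hn. split; [apply H1|apply H2]; lia. Qed.

Lemma ev_imp (P Q : nat -> Prop) : ev P -> (forall n, P n -> Q n) -> ev Q.
Proof. intros [N1 H1] H. exists N1. intros n Hn. apply H, H1, Hn. Qed.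

Lemma cv_ev u Mt : cv_infty u -> ev (fun n => Mt < u n).
Proof. intros H. destruct (H Mt) as [N0 H0]. exists N0. auto. Qed.

Lemma small_exp B e : 0 < e -> exists X, forall y, X <= y -> B * exp (- y) <= e.
Proof.
intros He. exists (Rabs B / e + 1). intros y Hy.
assert (0 <= Rabs B) by apply Rabs_pos.
assert (Hy0 : 0 < y). { assert (0 <= Rabs B / e) by (apply Rmult_le_pos; [lra|left; apply Rinv_0_lt_compat; lra]). lra. }
assert (E1 := exp_ineq1_le y). rewrite exp_Ropp.
assert (0 < exp y) by apply exp_pos.
apply Rle_trans with (Rabs B / exp y).
{ unfold Rdiv. apply Rmult_le_compat_r. left; apply Rinv_0_lt_compat; lra. apply Rle_abs. }
apply Rle_trans with (Rabs B / y).
{ unfold Rdiv. apply Rmult_le_compat_l; auto. apply Rinv_le_contravar; lra. }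
apply Rmult_le_reg_r with (y / e). apply Rdiv_lt_0_compat; lra.
replace (Rabs B / y * (y / e)) with (Rabs B / e) by (field; lra).
replace (e * (y / e)) with y by (field; lra). lra.
Qed.

Section Fam.
Variable F : nat -> chain.
Hypothesis HG : forall n, good (F n).
Hypothesis Hchi : cv_infty (fun n => chi2 (F n)).

Let HMn n := good_HM (F n) (HG n).
Let HPn n := good_HP (F n) (HG n).
Let Am n := psum (F n) (sz (F n) - 1).
Let lJ n c := lam (F n) (jn (F n) c).
Let tau n c := taun (F n) c.

Lemma big c : ev (fun n => c < Am n).
Proof.
apply (ev_imp (fun n => 1 + c < chi2 (F n))). apply cv_ev; auto.
intros n H. rewrite good_chi2 in H by auto. unfold Am. lra.
Qed.

Lemma jp n c : 0 < c -> c < Am n ->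
  (1 <= jn (F n) c <= sz (F n) - 1)%nat /\ c < psum (F n) (jn (F n) c) /\ psum (F n) (jn (F n) c - 1) <= c /\ 0 < lJ n c.
Proof.
intros H0 H1. destruct (jn_props (F n) (HMn n) (HPn n) c H0 H1) as [A1 [A2 A3]].
repeat split; auto; try lia. apply (lampos (F n) (HMn n) (HPn n)). lia.
Qed.

Lemma lJ_mono n c1 c2 : 0 < c1 -> c1 <= c2 -> c2 < Am n -> lJ n c1 <= lJ n c2.
Proof.
intros H0 H1 H2. assert (Hj := jn_mono (F n) (HMn n) (HPn n) c1 c2 H0 H1 H2).
destruct (jp n c1) as [B1 _]; [lra|lra|]. destruct (jp n c2) as [B2 _]; [lra|lra|].
apply (HMn n); lia.
Qed.

Lemma tau_nonneg n c : 0 < c -> c < Am n -> 0 <= tau n c.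
Proof. intros. destruct (tau_props (F n) (HMn n) (HPn n) c) as [_ [_ Hh]]; auto. Qed.

Lemma tau_mono' n c1 c2 : 0 < c1 -> c1 <= c2 -> c2 < Am n -> tau n c2 <= tau n c1.
Proof. intros. apply (tau_mono (F n) (HMn n) (HPn n)); auto. Qed.

Lemma cv_ge (u v : nat -> R) : cv_infty u -> ev (fun n => u n <= v n) -> cv_infty v.
Proof.
intros Hu Hv Mt. destruct (ev_and _ _ (cv_ev u Mt Hu) Hv) as [N0 H0].
exists N0. intros n Hn. destruct (H0 n Hn). lra.
Qed.

Lemma d2_eq n t : Defs.d2 (F n) t = sqrt (ff (F n) t).
Proof. apply good_d2. auto. Qed.

Lemma ffn_nonneg n t : 0 <= ff (F n) t.
Proof. apply (ff_nonneg (F n) (HMn n) (HPn n)). Qed.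

Lemma L12 : has_L2_cutoff F -> forall eps c, 0 < eps -> 0 < c ->
  cv_infty (fun n => T2 (F n) eps * lam (F n) (jn (F n) c)).
Proof.
intros [t [[N0 Ht] Hcut]] eps c He Hc Mt.
destruct (Hcut (1/2)) as [Hup Hlow]; [lra|].
set (Mt' := Rmax Mt 0 + 1).
assert (HMt' : 0 < Mt') by (unfold Mt'; assert (0 <= Rmax Mt 0) by apply Rmax_r; lra).
set (eta := sqrt (c * exp (-6 * Mt'))).
assert (Heta : 0 < eta) by (apply sqrt_lt_R0; assert (0 < exp (-6 * Mt')) by apply exp_pos; nra).
destruct (Hup eta Heta) as [N1 H1].
destruct (cv_ev _ eps Hlow) as [N2 H2].
destruct (big c) as [N3 H3].
exists (N0 + N1 + N2 + N3)%nat. intros n Hn.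
assert (Htn := Ht n ltac:(lia)). assert (A1 := H1 n ltac:(lia)). assert (A2 := H2 n ltac:(lia)).
assert (A3 := H3 n ltac:(lia)).
destruct (jp n c Hc A3) as [Hj [Hcj [_ Hl]]]. unfold lJ in Hl.
rewrite d2_eq in A2. apply sqrt_gt_iff in A2; [|apply ffn_nonneg|auto].
assert (HT : (1 - 1/2) * t n <= T2 (F n) eps) by (apply (T2_ge (F n) (HG n)); auto).
unfold Rdist in A1. rewrite Rminus_0_r, d2_eq in A1. rewrite Rabs_pos_eq in A1 by apply sqrt_pos.
assert (A1' : ff (F n) ((1 + 1/2) * t n) < eta ^ 2).
{ destruct (Rlt_dec (ff (F n) ((1 + 1/2) * t n)) (eta ^ 2)) as [|nn]; auto. exfalso.
  apply Rnot_lt_le in nn. assert (eta <= sqrt (ff (F n) ((1 + 1/2) * t n))).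
  { rewrite <- (sqrt_pow2 eta) by lra. apply sqrt_le_1_alt; auto. } lra. }
unfold eta in A1'. rewrite pow2_sqrt in A1' by (assert (0 < exp (-6 * Mt')) by apply exp_pos; nra).
assert (LB := ff_LB (F n) (HMn n) (HPn n) ((1 + 1/2) * t n) (jn (F n) c) ltac:(lra) Hj).
assert (Hexp : exp (-2 * lam (F n) (jn (F n) c) * ((1 + 1 / 2) * t n)) < exp (-6 * Mt')).
{ assert (0 < exp (-2 * lam (F n) (jn (F n) c) * ((1 + 1 / 2) * t n))) by apply exp_pos. nra. }
assert (Hlt : -2 * lam (F n) (jn (F n) c) * ((1 + 1 / 2) * t n) < -6 * Mt').
{ destruct (Rlt_dec (-2 * lam (F n) (jn (F n) c) * ((1 + 1 / 2) * t n)) (-6 * Mt')) as [|nn]; auto.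
  apply Rnot_lt_le in nn. apply exp_le_mono in nn. lra. }
assert (Mt <= Rmax Mt 0) by apply Rmax_l.
unfold Mt' in *. nra.
Qed.


Lemma upper2 n c K : 0 < c -> c < Am n -> 0 < K ->
  ff (F n) (2 * tau n c + K / lJ n c) <= c + 5 * exp (-2 * K).
Proof.
intros Hc Hcn HK.
destruct (jp n c Hc Hcn) as [Hj [_ [Hj1 Hl]]].
destruct (tau_props (F n) (HMn n) (HPn n) c Hc Hcn) as [Hk [_ Ht0]].
fold (tau n c) in Hk, Ht0. fold (lJ n c) in *.
set (u := tau n c + K / lJ n c).
assert (HKl : 0 < K / lJ n c) by (apply Rdiv_lt_0_compat; auto).
assert (Hu : 0 < u) by (unfold u; lra).
replace (2 * tau n c + K / lJ n c) with (tau n c + u) by (unfold u; ring).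
rewrite (ff_split (F n) (HMn n) (HPn n) (jn (F n) c)) by auto.
assert (H1 := head_bound0 (F n) (HMn n) (HPn n) (jn (F n) c) (tau n c + u) ltac:(lra) Hj).
assert (H2 := tail_abel (F n) (HMn n) (HPn n) (jn (F n) c) (tau n c) u Hj Ht0 Hu Hk).
fold (lJ n c) in H2.
assert (H3 : 1 + 2 * (tau n c + u) / u <= 5).
{ apply Rle_trans with (1 + 2 * (u + u) / u).
  - unfold Rdiv. apply Rplus_le_compat_l. apply Rmult_le_compat_r. left; apply Rinv_0_lt_compat; lra.
    unfold u. assert (0 <= K / lJ n c) by lra. lra.
  - right. field. lra. }
assert (H4 : exp (-2 * lJ n c * u) <= exp (-2 * K)).
{ apply exp_le_mono. unfold u. replace (lJ n c * (tau n c + K / lJ n c)) with (lJ n c * tau n c + K) by (field; lra).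
  assert (0 <= lJ n c * tau n c) by nra.
  replace (-2 * lJ n c * (tau n c + K / lJ n c)) with (-2 * (lJ n c * tau n c + K)) by (field; lra). lra. }
assert (0 < exp (-2 * lJ n c * u)) by apply exp_pos.
assert (0 < exp (-2 * K)) by apply exp_pos.
assert (0 <= 1 + 2 * (tau n c + u) / u). { unfold Rdiv. assert (0 < / u) by (apply Rinv_0_lt_compat; lra). nra. }
assert ((1 + 2 * (tau n c + u) / u) * exp (-2 * lJ n c * u) <= 5 * exp (-2 * K)).
{ apply Rmult_le_compat; lra. }
lra.
Qed.

Lemma Kexp q : exists K, 0 < K /\ forall y, K <= y -> 5 * exp (-2 * y) <= q \/ q <= 0.
Proof.
destruct (Rle_dec q 0) as [Hq|Hq].
{ exists 1. split; [lra|]. intros; right; auto. }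
destruct (small_exp 5 q) as [X HX]; [lra|].
exists (Rmax X 1). split. { assert (1 <= Rmax X 1) by apply Rmax_r. lra. }
intros y Hy. left. replace (-2 * y) with (- (2 * y)) by ring. apply HX.
assert (X <= Rmax X 1) by apply Rmax_l. assert (1 <= Rmax X 1) by apply Rmax_r. lra.
Qed.

Lemma Kbig q : exists K, 0 < K /\ q < exp (2 * K).
Proof.
exists (Rabs (ln (Rabs q + 1)) + 1). split. assert (0 <= Rabs (ln (Rabs q + 1))) by apply Rabs_pos. lra.
assert (q <= Rabs q) by apply Rle_abs. assert (0 <= Rabs q) by apply Rabs_pos.
apply Rlt_le_trans with (Rabs q + 1). lra.
rewrite <- (exp_ln (Rabs q + 1)) at 1 by lra. apply exp_le_mono.
assert (ln (Rabs q + 1) <= Rabs (ln (Rabs q + 1))) by apply Rle_abs.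
assert (0 <= Rabs (ln (Rabs q + 1))) by apply Rabs_pos. lra.
Qed.

Lemma Gl c0 c1 : 0 < c0 -> c0 < c1 -> exists K2, 0 < K2 /\
  ev (fun n => tau n c0 - K2 / lJ n c0 < 2 * tau n c1).
Proof.
intros H0 H1.
destruct (Kexp c1) as [K' [HK' HK'x]].
destruct (Kbig (2 * c1 * (1 + c0) / c0)) as [K [HK HKq]].
exists (K + K'). split; [lra|].
apply (ev_imp _ _ (big c1)). intros n Hn.
assert (Hn0 : c0 < Am n) by lra.
destruct (jp n c0 H0 Hn0) as [Hj0 [_ [_ Hl0]]].
destruct (jp n c1 ltac:(lra) Hn) as [Hj1 [_ [_ Hl1]]].
assert (Hmono : lJ n c0 <= lJ n c1) by (apply lJ_mono; lra).
assert (Ht1 := tau_nonneg n c1 ltac:(lra) Hn).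
assert (U := upper2 n c1 K' ltac:(lra) Hn HK').
assert (U' : 5 * exp (-2 * K') <= c1) by (destruct (HK'x K' ltac:(lra)); lra).
set (t := 2 * tau n c1 + K' / lJ n c1) in *.
assert (Ht : 0 <= t). { unfold t. assert (0 < K' / lJ n c1) by (apply Rdiv_lt_0_compat; auto). lra. }
assert (Hlt : tau n c0 - K / lJ n c0 < t).
{ destruct (Rlt_dec (tau n c0 - K / lJ n c0) t) as [|nn]; auto. exfalso. apply Rnot_lt_le in nn.
  assert (HK0 : 0 < K / lJ n c0) by (apply Rdiv_lt_0_compat; auto).
  assert (L := ff_lower (F n) (HMn n) (HPn n) c0 t H0 Hn0 Ht ltac:(fold (tau n c0); lra)).
  fold (lJ n c0) (tau n c0) in L.
  assert (E1 : exp (2 * K) <= exp (2 * lJ n c0 * (tau n c0 - t))).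
  { apply exp_le_mono. assert (lJ n c0 * (K / lJ n c0) = K) by (field; lra).
    assert (K / lJ n c0 <= tau n c0 - t) by lra. nra. }
  assert (Hq : 0 < c0 / (1 + c0)) by (apply Rdiv_lt_0_compat; lra).
  assert (c0 / (1 + c0) * exp (2 * K) > 2 * c1).
  { apply Rmult_lt_compat_l with (r := c0 / (1 + c0)) in HKq; auto.
    replace (c0 / (1 + c0) * (2 * c1 * (1 + c0) / c0)) with (2 * c1) in HKq by (field; lra). lra. }
  assert (c0 / (1 + c0) * exp (2 * K) <= c0 / (1 + c0) * exp (2 * lJ n c0 * (tau n c0 - t))) by
    (apply Rmult_le_compat_l; lra).
  lra. }
unfold t in Hlt.
assert (K' / lJ n c1 <= K' / lJ n c0).
{ unfold Rdiv. apply Rmult_le_compat_l; [lra|]. apply Rinv_le_contravar; auto. }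
unfold Rdiv in *. rewrite Rmult_plus_distr_r. lra.
Qed.

Lemma GG c c0 c1 : 0 < c -> c <= c0 -> c0 < c1 ->
  cv_infty (fun n => tau n c0 * lJ n c) -> cv_infty (fun n => tau n c1 * lJ n c).
Proof.
intros Hc H0 H1 Hcv Mt.
destruct (Gl c0 c1) as [K2 [HK2 HG2]]; [lra|auto|].
destruct (ev_and _ _ (ev_and _ _ HG2 (big c0)) (cv_ev _ (2 * Mt + K2) Hcv)) as [N0 HN].
exists N0. intros n Hn. destruct (HN n Hn) as [[A1 A2] A3]. simpl in A3.
destruct (jp n c Hc ltac:(lra)) as [_ [_ [_ Hl]]].
destruct (jp n c0 ltac:(lra) A2) as [_ [_ [_ Hl0]]].
assert (Hm : lJ n c <= lJ n c0) by (apply lJ_mono; lra).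
assert (A1' : tau n c0 * lJ n c - K2 / lJ n c0 * lJ n c < 2 * tau n c1 * lJ n c).
{ apply Rmult_lt_compat_r with (r := lJ n c) in A1; auto. lra. }
assert (K2 / lJ n c0 * lJ n c <= K2).
{ unfold Rdiv. rewrite Rmult_assoc. rewrite <- (Rmult_1_r K2) at 2. apply Rmult_le_compat_l; [lra|].
  apply Rmult_le_reg_l with (lJ n c0); auto. rewrite <- Rmult_assoc, Rinv_r by lra. lra. }
lra.
Qed.


Lemma T2_le n eps t : 0 < eps -> 0 <= t -> ff (F n) t <= eps ^ 2 -> T2 (F n) eps <= t.
Proof. intros. destruct (T2_spec (F n) (HG n) eps) as [_ [_ H3]]; auto. Qed.

Lemma L36 : (exists eps, 0 < eps /\ forall c, 0 < c -> cv_infty (fun n => T2 (F n) eps * lJ n c)) ->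
  exists ct, 0 < ct /\ forall c, 0 < c -> cv_infty (fun n => tau n ct * lJ n c).
Proof.
intros [e0 [He0 H3]]. set (ct := e0 ^ 2 / 2).
assert (Hct : 0 < ct) by (unfold ct; nra).
exists ct. split; auto.
destruct (Kexp ct) as [K [HK HKx]].
assert (Key : ev (fun n => T2 (F n) e0 <= 2 * tau n ct + K / lJ n ct)).
{ apply (ev_imp _ _ (big ct)). intros n Hn.
  destruct (jp n ct Hct Hn) as [_ [_ [_ Hl]]].
  assert (Ht := tau_nonneg n ct Hct Hn).
  apply T2_le; auto. assert (0 < K / lJ n ct) by (apply Rdiv_lt_0_compat; auto). lra.
  assert (U := upper2 n ct K Hct Hn HK).
  assert (5 * exp (-2 * K) <= ct) by (destruct (HKx K ltac:(lra)); lra).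
  unfold ct in *. lra. }
assert (aux : forall c, 0 < c -> c <= ct -> cv_infty (fun n => tau n ct * lJ n c)).
{ intros c Hc Hcc Mt.
  destruct (ev_and _ _ (ev_and _ _ Key (big ct)) (cv_ev _ (2 * Mt + K) (H3 c Hc))) as [N0 HN].
  exists N0. intros n Hn. destruct (HN n Hn) as [[A1 A2] A3]. simpl in A3.
  destruct (jp n c Hc ltac:(lra)) as [_ [_ [_ Hl]]].
  destruct (jp n ct Hct A2) as [_ [_ [_ Hl0]]].
  assert (Hm : lJ n c <= lJ n ct) by (apply lJ_mono; lra).
  assert (B1 : T2 (F n) e0 * lJ n c <= 2 * tau n ct * lJ n c + K / lJ n ct * lJ n c).
  { apply Rmult_le_compat_r with (r := lJ n c) in A1; lra. }
  assert (K / lJ n ct * lJ n c <= K).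
  { unfold Rdiv. rewrite Rmult_assoc. rewrite <- (Rmult_1_r K) at 2. apply Rmult_le_compat_l; [lra|].
    apply Rmult_le_reg_l with (lJ n ct); auto. rewrite <- Rmult_assoc, Rinv_r by lra. lra. }
  lra. }
intros c Hc. destruct (Rle_dec c ct) as [Hle|Hgt].
- apply aux; auto.
- apply (cv_ge _ _ (aux ct Hct (Rle_refl _))).
  apply (ev_imp _ _ (big c)). intros n Hn.
  assert (Hm : lJ n ct <= lJ n c) by (apply lJ_mono; lra).
  assert (Ht := tau_nonneg n ct Hct ltac:(lra)).
  apply Rmult_le_compat_l; auto.
Qed.

Lemma L65 : (exists ct0, 0 < ct0 /\ forall c, 0 < c -> cv_infty (fun n => tau n ct0 * lJ n c)) ->
  forall ct c, 0 < ct -> 0 < c -> cv_infty (fun n => tau n ct * lJ n c).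
Proof.
intros [ct0 [H0 H6]] ct c Hct Hc.
destruct (Rle_dec ct ct0) as [Hle|Hgt].
- apply (cv_ge _ _ (H6 c Hc)). apply (ev_imp _ _ (big (Rmax ct0 c))). intros n Hn.
  assert (ct0 <= Rmax ct0 c) by apply Rmax_l. assert (c <= Rmax ct0 c) by apply Rmax_r.
  destruct (jp n c Hc ltac:(lra)) as [_ [_ [_ Hl]]].
  assert (tau n ct0 <= tau n ct) by (apply tau_mono'; lra).
  apply Rmult_le_compat_r; lra.
- assert (aux : forall c, 0 < c -> c <= ct0 -> cv_infty (fun n => tau n ct * lJ n c)).
  { intros c' Hc' Hc'0. apply (GG c' ct0 ct); auto. lra. }
  destruct (Rle_dec c ct0) as [Hle'|Hgt'].
  + apply aux; auto.
  + apply (cv_ge _ _ (aux ct0 H0 (Rle_refl _))).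
    apply (ev_imp _ _ (big (Rmax ct c))). intros n Hn.
    assert (ct <= Rmax ct c) by apply Rmax_l. assert (c <= Rmax ct c) by apply Rmax_r.
    assert (Hm : lJ n ct0 <= lJ n c) by (apply lJ_mono; lra).
    assert (Ht := tau_nonneg n ct Hct ltac:(lra)).
    apply Rmult_le_compat_l; auto.
Qed.

Lemma L45 : (forall c, 0 < c -> cv_infty (fun n => tau n c * lJ n c)) ->
  forall ct c, 0 < ct -> 0 < c -> cv_infty (fun n => tau n ct * lJ n c).
Proof.
intros H4 ct c Hct Hc.
destruct (Rle_dec ct c) as [Hle|Hgt].
- apply (cv_ge _ _ (H4 c Hc)). apply (ev_imp _ _ (big c)). intros n Hn.
  destruct (jp n c Hc Hn) as [_ [_ [_ Hl]]].
  assert (tau n c <= tau n ct) by (apply tau_mono'; lra).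
  apply Rmult_le_compat_r; lra.
- apply (GG c c ct); auto. lra. lra.
Qed.


Lemma head_small n c c' t : 0 < c' -> c' <= c -> c < Am n -> 0 <= t ->
  head (F n) (jn (F n) c) t <= c' + c * exp (-2 * lJ n c' * t).
Proof.
intros H0 H1 H2 Ht.
destruct (jp n c ltac:(lra) H2) as [Hj [_ [Hj1 _]]].
destruct (jp n c' H0 ltac:(lra)) as [Hk [_ [Hk1 _]]].
assert (Hkj := jn_mono (F n) (HMn n) (HPn n) c' c H0 H1 H2).
assert (HB := head_bound (F n) (HMn n) (HPn n) (jn (F n) c) (jn (F n) c') t Ht ltac:(lia) Hkj ltac:(lia)).
fold (lJ n c') in HB.
assert (0 < exp (-2 * lJ n c' * t)) by apply exp_pos.
assert (psum (F n) (jn (F n) c - 1) * exp (-2 * lJ n c' * t) <= c * exp (-2 * lJ n c' * t)) by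
  (apply Rmult_le_compat_r; lra).
lra.
Qed.

Lemma sqrt_lt_of n t eta : 0 < eta -> ff (F n) t <= 3 / 4 * eta ^ 2 -> sqrt (ff (F n) t) < eta.
Proof.
intros He Hf. apply Rle_lt_trans with (9/10 * eta).
- apply sqrt_le_iff. apply ffn_nonneg. lra. nra.
- lra.
Qed.

Lemma L51 : (forall ct c, 0 < ct -> 0 < c -> cv_infty (fun n => tau n ct * lJ n c)) ->
  forall c, 0 < c -> cutoff_time F (fun n => tau n c).
Proof.
intros H5 c Hc. split.
{ destruct (ev_and _ _ (cv_ev _ 0 (H5 c c Hc Hc)) (big c)) as [N0 HN]. exists N0. intros n Hn.
  destruct (HN n Hn) as [A1 A2]. destruct (jp n c Hc A2) as [_ [_ [_ Hl]]].
  destruct (Rlt_dec 0 (tau n c)) as [|nn]; auto. exfalso. apply Rnot_lt_le in nn. nra. }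
intros a [Ha0 Ha1]. split.
- intros eta Heta. set (c' := Rmin c (eta ^ 2 / 4)).
  assert (Hc' : 0 < c') by (unfold c'; apply Rmin_glb_lt; nra).
  assert (Hc'1 : c' <= c) by apply Rmin_l. assert (Hc'2 : c' <= eta ^ 2 / 4) by apply Rmin_r.
  destruct (small_exp c (eta ^ 2 / 4)) as [X1 HX1]; [nra|].
  destruct (small_exp (1 + 2 * (1 + a) / a) (eta ^ 2 / 4)) as [X2 HX2]; [nra|].
  destruct (ev_and _ _ (ev_and _ _ (cv_ev _ (Rabs X1) (H5 c c' Hc Hc')) (cv_ev _ (Rabs X2 / (2 * a)) (H5 c c Hc Hc))) (big c)) as [N0 HN].
  exists N0. intros n Hn. destruct (HN n Hn) as [[A1 A2] A3].
  destruct (jp n c Hc A3) as [Hj [_ [_ Hl]]].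
  destruct (jp n c' Hc' ltac:(lra)) as [_ [_ [_ Hl']]].
  assert (HX1a := Rle_abs X1). assert (HX2a := Rle_abs X2). assert (0 <= Rabs X1) by apply Rabs_pos.
  assert (0 <= Rabs X2) by apply Rabs_pos.
  assert (Htau : 0 < tau n c).
  { assert (0 <= Rabs X2 / (2 * a)) by (apply Rmult_le_pos; [lra|left; apply Rinv_0_lt_compat; lra]).
    destruct (Rlt_dec 0 (tau n c)) as [|nn]; auto. apply Rnot_lt_le in nn. nra. }
  unfold Rdist. rewrite Rminus_0_r, d2_eq, Rabs_pos_eq by apply sqrt_pos.
  apply sqrt_lt_of; auto.
  rewrite (ff_split (F n) (HMn n) (HPn n) (jn (F n) c)) by auto.
  assert (HH := head_small n c c' ((1 + a) * tau n c) Hc' Hc'1 A3 ltac:(nra)).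
  assert (HH2 : c * exp (-2 * lJ n c' * ((1 + a) * tau n c)) <= eta ^ 2 / 4).
  { replace (-2 * lJ n c' * ((1 + a) * tau n c)) with (- (2 * (1 + a) * (tau n c * lJ n c'))) by ring.
    apply HX1. nra. }
  destruct (tau_props (F n) (HMn n) (HPn n) c Hc A3) as [Hk [_ Ht0]].
  assert (HT := tail_abel (F n) (HMn n) (HPn n) (jn (F n) c) (tau n c) (a * tau n c) Hj Ht0 ltac:(nra) Hk).
  replace (tau n c + a * tau n c) with ((1 + a) * tau n c) in HT by ring.
  replace (2 * ((1 + a) * tau n c) / (a * tau n c)) with (2 * (1 + a) / a) in HT by (field; lra).
  fold (lJ n c) in HT.
  assert (HT2 : (1 + 2 * (1 + a) / a) * exp (-2 * lJ n c * (a * tau n c)) <= eta ^ 2 / 4).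
  { replace (-2 * lJ n c * (a * tau n c)) with (- (2 * a * (tau n c * lJ n c))) by ring.
    apply HX2. apply Rmult_lt_compat_l with (r := 2 * a) in A2; [|lra].
    replace (2 * a * (Rabs X2 / (2 * a))) with (Rabs X2) in A2 by (field; lra). lra. }
  lra.
- intros Mt. set (Mt' := Rmax Mt 1).
  assert (HM1 : 1 <= Mt') by apply Rmax_r. assert (HM2 : Mt <= Mt') by apply Rmax_l.
  set (Q := Mt' ^ 2 * (1 + c) / (c * (2 * a))).
  destruct (ev_and _ _ (cv_ev _ Q (H5 c c Hc Hc)) (big c)) as [N0 HN].
  exists N0. intros n Hn. destruct (HN n Hn) as [A1 A2].
  destruct (jp n c Hc A2) as [Hj [_ [_ Hl]]].
  assert (Ht0 := tau_nonneg n c Hc A2).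
  assert (L := ff_lower (F n) (HMn n) (HPn n) c ((1 - a) * tau n c) Hc A2 ltac:(nra) ltac:(fold (tau n c); nra)).
  fold (lJ n c) (tau n c) in L.
  replace (tau n c - (1 - a) * tau n c) with (a * tau n c) in L by ring.
  assert (E1 := exp_ineq1_le (2 * lJ n c * (a * tau n c))).
  assert (Hq : 0 < c / (1 + c)) by (apply Rdiv_lt_0_compat; lra).
  assert (Mt' ^ 2 < ff (F n) ((1 - a) * tau n c)).
  { apply Rlt_le_trans with (c / (1 + c) * (1 + 2 * lJ n c * (a * tau n c))); [|nra].
    assert (EQ : c / (1 + c) * (2 * a) * Q = Mt' ^ 2) by (unfold Q; field; lra).
    assert (c / (1 + c) * (2 * a) * Q < c / (1 + c) * (2 * a) * (tau n c * lJ n c)).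
    { apply Rmult_lt_compat_l; [nra|auto]. }
    nra. }
  rewrite d2_eq. apply Rle_lt_trans with Mt'; auto.
  apply sqrt_gt_iff; auto. apply ffn_nonneg. lra.
Qed.


Lemma T2diff eps delta c : 0 < eps -> 0 < delta -> 0 < c ->
  (forall e c, 0 < e -> 0 < c -> cv_infty (fun n => T2 (F n) e * lJ n c)) ->
  exists K, 0 <= K /\ ev (fun n => T2 (F n) eps <= T2 (F n) delta + K / lJ n c).
Proof.
intros He Hd Hc H2.
set (c' := Rmin c (eps ^ 2 / 4)).
assert (Hc' : 0 < c') by (unfold c'; apply Rmin_glb_lt; nra).
assert (Hc'1 : c' <= c) by apply Rmin_l. assert (Hc'2 : c' <= eps ^ 2 / 4) by apply Rmin_r.
destruct (small_exp c (eps ^ 2 / 4)) as [X1 HX1]; [nra|].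
destruct (small_exp (delta ^ 2) (eps ^ 2 / 4)) as [X0 HX0]; [nra|].
exists (Rmax X0 0). split. apply Rmax_r.
apply (ev_imp _ _ (ev_and _ _ (cv_ev _ (Rabs X1) (H2 delta c' Hd Hc')) (big c))).
intros n [A1 A2].
destruct (jp n c Hc A2) as [Hj [_ [_ Hl]]].
destruct (jp n c' Hc' ltac:(lra)) as [_ [_ [_ Hl']]].
destruct (T2_spec (F n) (HG n) delta Hd) as [HT0 [HT1 _]].
set (T := T2 (F n) delta) in *.
set (K := Rmax X0 0).
assert (HK0 : 0 <= K) by apply Rmax_r. assert (HK1 : X0 <= K) by apply Rmax_l.
assert (HKl : 0 <= K / lJ n c) by (apply Rmult_le_pos; [lra|left; apply Rinv_0_lt_compat; lra]).
apply T2_le; auto. lra.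
rewrite (ff_split (F n) (HMn n) (HPn n) (jn (F n) c)) by auto.
assert (HH := head_small n c c' (T + K / lJ n c) Hc' Hc'1 A2 ltac:(lra)).
assert (HX1a := Rle_abs X1). assert (0 <= Rabs X1) by apply Rabs_pos.
assert (HH2 : c * exp (-2 * lJ n c' * (T + K / lJ n c)) <= eps ^ 2 / 4).
{ replace (-2 * lJ n c' * (T + K / lJ n c)) with (- (2 * (T * lJ n c') + 2 * lJ n c' * (K / lJ n c))) by ring.
  apply HX1. assert (0 <= lJ n c' * (K / lJ n c)) by nra. lra. }
assert (HTd := tail_decay (F n) (HMn n) (HPn n) (jn (F n) c) T (K / lJ n c) HKl Hj).
fold (lJ n c) in HTd.
replace (lJ n c * (K / lJ n c)) with K in HTd by (field; lra).
assert (HTl := tail_le (F n) (HMn n) (HPn n) (jn (F n) c) T Hj).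
replace (-2 * lJ n c * (K / lJ n c)) with (- (2 * K)) in HTd by (field; lra).
assert (HE : delta ^ 2 * exp (- (2 * K)) <= eps ^ 2 / 4) by (apply HX0; lra).
assert (0 < exp (- (2 * K))) by apply exp_pos.
assert (exp (- (2 * K)) * tail (F n) (jn (F n) c) T <= exp (- (2 * K)) * delta ^ 2).
{ apply Rmult_le_compat_l; lra. }
lra.
Qed.

Lemma LM2 : (forall e c, 0 < e -> 0 < c -> cv_infty (fun n => T2 (F n) e * lJ n c)) ->
  forall eps delta c, 0 < eps -> 0 < delta -> 0 < c ->
  bigO (fun n => Rabs (T2 (F n) eps - T2 (F n) delta)) (fun n => / lJ n c).
Proof.
intros H2 eps delta c He Hd Hc.
destruct (T2diff eps delta c He Hd Hc H2) as [K1 [HK1 E1]].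
destruct (T2diff delta eps c Hd He Hc H2) as [K2 [HK2 E2]].
destruct (ev_and _ _ (ev_and _ _ E1 E2) (big c)) as [N0 HN].
exists (Rmax K1 K2), N0. intros n Hn. destruct (HN n Hn) as [[A1 A2] A3].
destruct (jp n c Hc A3) as [_ [_ [_ Hl]]].
assert (K1 <= Rmax K1 K2) by apply Rmax_l. assert (K2 <= Rmax K1 K2) by apply Rmax_r.
assert (0 < / lJ n c) by (apply Rinv_0_lt_compat; auto).
unfold Rdiv in *. apply Rabs_le. split; nra.
Qed.

Lemma LM3 : (forall ct c, 0 < ct -> 0 < c -> cv_infty (fun n => tau n ct * lJ n c)) ->
  forall eps c, 0 < eps -> 0 < c ->
  bigO (fun n => Rabs (T2 (F n) eps - tau n c)) (fun n => sqrt (tau n c / lJ n c)).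
Proof.
intros H5 eps c He Hc.
destruct (Kbig (eps ^ 2 * (1 + c) / c)) as [K [HK HKq]].
set (c' := Rmin c (eps ^ 2 / 4)).
assert (Hc' : 0 < c') by (unfold c'; apply Rmin_glb_lt; nra).
assert (Hc'1 : c' <= c) by apply Rmin_l. assert (Hc'2 : c' <= eps ^ 2 / 4) by apply Rmin_r.
destruct (small_exp c (eps ^ 2 / 4)) as [X1 HX1]; [nra|].
set (W := Rmax 1 ((6 / eps ^ 2) ^ 2)).
destruct (ev_and _ _ (ev_and _ _ (cv_ev _ W (H5 c c Hc Hc)) (cv_ev _ (Rabs X1) (H5 c c' Hc Hc'))) (big c)) as [N0 HN].
exists (Rmax K 1), N0. intros n Hn. destruct (HN n Hn) as [[A1 A2] A3].
destruct (jp n c Hc A3) as [Hj [_ [_ Hl]]].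
destruct (jp n c' Hc' ltac:(lra)) as [_ [_ [_ Hl']]].
assert (HW1 : 1 <= W) by apply Rmax_l. assert (HW2 : (6 / eps ^ 2) ^ 2 <= W) by apply Rmax_r.
set (l := lJ n c) in *. set (ta := tau n c) in *.
assert (Hta : 0 < ta) by nra.
set (x := sqrt (ta * l)).
assert (Hx0 : 0 < x) by (apply sqrt_lt_R0; nra).
assert (Hxx : x * x = ta * l) by (unfold x; apply sqrt_sqrt; nra).
set (s := x / l).
assert (Hs0 : 0 < s) by (unfold s; apply Rdiv_lt_0_compat; auto).
assert (Hs : sqrt (ta / l) = s).
{ rewrite <- (sqrt_pow2 s) by lra. f_equal. unfold s. replace ((x / l) ^ 2) with (x * x / (l * l)) by (field; lra). rewrite Hxx. field. lra. }
rewrite Hs.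
assert (HK1 : K <= Rmax K 1) by apply Rmax_l. assert (HK2 : 1 <= Rmax K 1) by apply Rmax_r.
assert (Low : ta - K / l <= T2 (F n) eps).
{ destruct (T2_spec (F n) (HG n) eps He) as [HT0 _].
  destruct (Rle_dec (ta - K / l) 0) as [|nn]; [lra|]. apply Rnot_le_lt in nn.
  apply (T2_ge (F n) (HG n)); auto.
  assert (HKl : 0 < K / l) by (apply Rdiv_lt_0_compat; lra).
  assert (L := ff_lower (F n) (HMn n) (HPn n) c (ta - K / l) Hc A3 ltac:(lra) ltac:(unfold ta, tau; lra)).
  fold (lJ n c) (tau n c) in L. fold l ta in L.
  replace (2 * l * (ta - (ta - K / l))) with (2 * K) in L by (field; lra).
  assert (Hq : 0 < c / (1 + c)) by (apply Rdiv_lt_0_compat; lra).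
  apply Rmult_lt_compat_l with (r := c / (1 + c)) in HKq; auto.
  replace (c / (1 + c) * (eps ^ 2 * (1 + c) / c)) with (eps ^ 2) in HKq by (field; lra). lra. }
assert (Kl : K / l <= K * s).
{ unfold Rdiv. apply Rmult_le_compat_l; [lra|]. unfold s.
  apply Rmult_le_reg_l with l; auto. rewrite Rinv_r by lra. unfold Rdiv.
  replace (l * (x * / l)) with x by (field; lra).
  assert (1 <= x * x) by nra. nra. }
assert (Up : T2 (F n) eps <= ta + s).
{ apply T2_le; auto. lra.
  rewrite (ff_split (F n) (HMn n) (HPn n) (jn (F n) c)) by auto.
  assert (HH := head_small n c c' (ta + s) Hc' Hc'1 A3 ltac:(lra)).
  assert (HX1a := Rle_abs X1). assert (0 <= Rabs X1) by apply Rabs_pos.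
  assert (HH2 : c * exp (-2 * lJ n c' * (ta + s)) <= eps ^ 2 / 4).
  { replace (-2 * lJ n c' * (ta + s)) with (- (2 * (ta * lJ n c') + 2 * lJ n c' * s)) by ring.
    apply HX1. assert (0 <= lJ n c' * s) by nra. unfold ta, tau in *. lra. }
  destruct (tau_props (F n) (HMn n) (HPn n) c Hc A3) as [Hk [_ Ht0]].
  assert (HT := tail_abel (F n) (HMn n) (HPn n) (jn (F n) c) ta s Hj ltac:(lra) Hs0 Hk).
  fold (lJ n c) l in HT.
  assert (E1 : 1 + 2 * (ta + s) / s = 3 + 2 * x).
  { unfold s. assert (Eta : ta = x * x / l) by (rewrite Hxx; field; lra). rewrite Eta. field. split; lra. }
  assert (E2 : -2 * l * s = - (2 * x)) by (unfold s; field; lra).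
  rewrite E1, E2 in HT.
  assert (Ex := exp_ineq1_le x).
  assert (E3 : exp (- (2 * x)) * (exp x * exp x) = 1).
  { rewrite <- !exp_plus. replace (- (2 * x) + (x + x)) with 0 by ring. apply exp_0. }
  assert (0 < exp (- (2 * x))) by apply exp_pos.
  assert (HB : (3 + 2 * x) * exp (- (2 * x)) <= 3 / (1 + x)).
  { apply Rmult_le_reg_r with (1 + x); [lra|].
    replace (3 / (1 + x) * (1 + x)) with 3 by (field; lra).
    assert (exp (- (2 * x)) * ((1 + x) * (1 + x)) <= 1).
    { rewrite <- E3. apply Rmult_le_compat_l; [lra|]. nra. }
    nra. }
  assert (Hx6 : 6 / eps ^ 2 <= x).
  { unfold x. rewrite <- (sqrt_pow2 (6 / eps ^ 2)). apply sqrt_le_1_alt. lra.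
    apply Rlt_le. apply Rdiv_lt_0_compat; nra. }
  assert (3 / (1 + x) <= eps ^ 2 / 2).
  { apply Rmult_le_reg_r with (2 * (1 + x)). lra.
    replace (3 / (1 + x) * (2 * (1 + x))) with 6 by (field; lra).
    replace (eps ^ 2 / 2 * (2 * (1 + x))) with (eps ^ 2 * (1 + x)) by field.
    apply Rmult_le_compat_l with (r := eps ^ 2) in Hx6; [|nra].
    replace (eps ^ 2 * (6 / eps ^ 2)) with 6 in Hx6 by (field; nra). nra. }
  lra. }
apply Rabs_le. split; nra.
Qed.

End Fam.


Theorem theorem3p2 (F : nat -> chain)
  (Hchain : forall n, rev_chain (F n))
  (Hspec : forall n, spectral_data (F n))
  (Hchi : cv_infty (fun n => chi2 (F n))) :
  let P1 := has_L2_cutoff F in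
  let P2 := forall eps c, 0 < eps -> 0 < c ->
      cv_infty (fun n => T2 (F n) eps * lam (F n) (jn (F n) c)) in
  let P3 := exists eps, 0 < eps /\ forall c, 0 < c ->
      cv_infty (fun n => T2 (F n) eps * lam (F n) (jn (F n) c)) in
  let P4 := forall c, 0 < c ->
      cv_infty (fun n => taun (F n) c * lam (F n) (jn (F n) c)) in
  let P5 := forall ct c, 0 < ct -> 0 < c ->
      cv_infty (fun n => taun (F n) ct * lam (F n) (jn (F n) c)) in
  let P6 := exists ct, 0 < ct /\ forall c, 0 < c ->
      cv_infty (fun n => taun (F n) ct * lam (F n) (jn (F n) c)) in
  ((P1 <-> P2) /\ (P1 <-> P3) /\ (P1 <-> P4) /\ (P1 <-> P5) /\ (P1 <-> P6)) /\
  (P1 ->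
     (forall c, 0 < c -> cutoff_time F (fun n => taun (F n) c)) /\
     (forall eps delta c, 0 < eps -> 0 < delta -> 0 < c ->
        bigO (fun n => Rabs (T2 (F n) eps - T2 (F n) delta))
             (fun n => / lam (F n) (jn (F n) c))) /\
     (forall eps c, 0 < eps -> 0 < c ->
        bigO (fun n => Rabs (T2 (F n) eps - taun (F n) c))
             (fun n => sqrt (taun (F n) c / lam (F n) (jn (F n) c))))).
Proof.
intros P1 P2 P3 P4 P5 P6.
assert (HG : forall n, good (F n)) by (intros n; split; auto).
assert (h12 : P1 -> P2) by (intros H; exact (L12 F HG Hchi H)).
assert (h23 : P2 -> P3) by (intros H; exists 1; split; [lra|]; intros c Hc; apply H; lra).
assert (h36 : P3 -> P6) by (intros H; exact (L36 F HG Hchi H)).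
assert (h65 : P6 -> P5) by (intros H; exact (L65 F HG Hchi H)).
assert (h51 : P5 -> P1) by (intros H; exists (fun n => taun (F n) 1); exact (L51 F HG Hchi H 1 ltac:(lra))).
assert (h54 : P5 -> P4) by (intros H c Hc; apply H; auto).
assert (h45 : P4 -> P5) by (intros H; exact (L45 F HG Hchi H)).
split.
- repeat split; tauto.
- intros H1. split; [|split].
  + intros c Hc. exact (L51 F HG Hchi (h65 (h36 (h23 (h12 H1)))) c Hc).
  + exact (LM2 F HG Hchi (h12 H1)).
  + exact (LM3 F HG Hchi (h65 (h36 (h23 (h12 H1))))).
Qed.
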